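(* Suppose $\|\widehat\theta_t-\theta^*\|_{\Sigma_t}\le\beta_t$ for all $t\in[T]$ (with $\|\theta^*\|_2\le L_\theta$), and let $\lambda\ge L_\varphi^2$. Then $\sum_{k=1}^{K_T}\sum_{t=t_k}^{t_{k+1}-1}B^{1,t_k}_{s_t,a_t}\le\beta_T\Big(\big(\tfrac{32\beta_T}{\kappa}+\tfrac{128\sqrt2L_\varphi\eta}{\kappa\sqrt\lambda}\big)d\log\big(1+\tfrac{T\mathcal UL_\varphi^2}{\lambda d}\big)+2\sqrt{dT\log\big(1+\tfrac{T\mathcal UL_\varphi^2}{\lambda d}\big)}\Big)$.
   Context: Setting: MNL model with finite $\mathcal S,\mathcal A$, reachable sets $\mathcal S_{s,a}$, $\mathcal U=\max|\mathcal S_{s,a}|$, features $\varphi$, $p(s'\mid s,a,\theta)=\exp(\varphi(s,a,s')^\top\theta)/\sum_{s''\in\mathcal S_{s,a}}\exp(\varphi(s,a,s'')^\top\theta)$, true $\theta^*$; assumptions (A1) $\|\varphi\|_2\le L_\varphi$, $\|\theta^*\|_2\le L_\theta$, $\Theta=\{\|\theta\|_2\le L_\theta\}$; (A2) $\inf_{\theta\in\Theta}p(s'\mid s_t,a_t,\theta)p(s''\mid s_t,a_t,\theta)\ge\kappa\in(0,1)$ for all $t$, $s',s''\in\mathcal S_{s_t,a_t}$; (A3) each $\mathcal S_{s,a}$ has $s'$ with $\varphi(s,a,s')=0$. The trajectory $(s_t,a_t)_{t\le T}$ is generated by \texttt{UCMNLK}, which uses the online estimator ($\ell_t(\theta)=-\sum_{s'\in\mathcal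 S_{s_t,a_t}}\mathbf1\{s_{t+1}=s'\}\log p(s'\mid s_t,a_t,\theta)$, $\widehat\theta_1=0$, $\Sigma_1=\lambda I_d$, $\widehat\Sigma_t=\Sigma_t+\eta\nabla^2\ell_t(\widehat\theta_t)$, $\widehat\theta_{t+1}=\arg\min_{\theta\in\Theta}\{\nabla\ell_t(\widehat\theta_t)^\top(\theta-\widehat\theta_t)+\frac1{2\eta}\|\theta-\widehat\theta_t\|^2_{\widehat\Sigma_t}\}$, $\Sigma_{t+1}=\Sigma_t+\nabla^2\ell_t(\widehat\theta_{t+1})$, step size $\eta>0$) and splits time into episodes $k=1,\dots,K_T$ starting at $t_k$ ($t_1=1$, $t_{K_T+1}=T+1$), where a new episode starts as soon as $\det\Sigma_t>2\det\Sigma_{t_k}$. $\beta_t>0$ is the confidence radius, nondecreasing in $t$. $B^{1,t}_{s,a}=\beta_t\sum_{s'\in\mathcal S_{s,a}}p(s'\mid s,a,\widehat\theta_t)\|\varphi(s,a,s')-\sum_{s''\in\mathcal S_{s,a}}p(s''\mid s,a,\widehat\theta_t)\varphi(s,a,s'')\|_{\Sigma_t^{-1}}$. *)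

(* Defs.v *)
From HB Require Import structures.
From mathcomp Require Import all_boot all_order all_algebra.
From mathcomp Require Import reals.
From mathcomp.analysis Require Import sequences exp.
Set Implicit Arguments. Unset Strict Implicit. Unset Printing Implicit Defensive.
Import Order.TTheory GRing.Theory Num.Theory.
Local Open Scope ring_scope.

Section MNL.
Variables (R : realType) (S A : finType) (d : nat).

Definition dotv (u v : 'cV[R]_d) : R := \sum_i u i 0 * v i 0.
Definition norm2 (u : 'cV[R]_d) : R := Num.sqrt (dotv u u).
Definition msqnorm (M : 'M[R]_d) (u : 'cV[R]_d) : R := dotv u (M *m u).
Definition mnorm (M : 'M[R]_d) (u : 'cV[R]_d) : R := Num.sqrt (msqnorm M u).

Variables (Sr : S -> A -> {set S}) (phi : S -> A -> S -> 'cV[R]_d).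

Definition mnl_p (s : S) (a : A) (th : 'cV[R]_d) (s' : S) : R :=
  expR (dotv (phi s a s') th) /
  \sum_(s'' in Sr s a) expR (dotv (phi s a s'') th).

Definition mnl_mean (s : S) (a : A) (th : 'cV[R]_d) : 'cV[R]_d :=
  \sum_(s' in Sr s a) mnl_p s a th s' *: phi s a s'.

(* gradient of l_t(th) = - log p(s_next | s, a, th)  (closed form) *)
Definition loss_grad (s : S) (a : A) (s_next : S) (th : 'cV[R]_d) : 'cV[R]_d :=
  mnl_mean s a th - phi s a s_next.

(* Hessian of l_t at th (closed form; independent of the observed s_next) *)
Definition loss_hess (s : S) (a : A) (th : 'cV[R]_d) : 'M[R]_d :=
  \sum_(s' in Sr s a) mnl_p s a th s' *: (phi s a s' *m (phi s a s')^T)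
  - mnl_mean s a th *m (mnl_mean s a th)^T.

Definition omd_obj (eta : R) (g : 'cV[R]_d) (Sig_hat : 'M[R]_d)
  (th_t th : 'cV[R]_d) : R :=
  dotv g (th - th_t) + (2 * eta)^-1 * msqnorm Sig_hat (th - th_t).

(* B^{1,t}_{s,a} with beta = beta_t, Sig = Sigma_t, th = hat theta_t *)
Definition bonus1 (beta : R) (Sig : 'M[R]_d) (th : 'cV[R]_d) (s : S) (a : A) : R :=
  beta * \sum_(s' in Sr s a)
            mnl_p s a th s' * mnorm (invmx Sig) (phi s a s' - mnl_mean s a th).

Definition Umax : nat := \max_(sa : S * A) #|Sr sa.1 sa.2|.

End MNL.

(* Main.v *)
Require Import Defs.
From HB Require Import structures.
From mathcomp Require Import all_boot all_order all_algebra.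
From mathcomp Require Import reals.
From mathcomp.analysis Require Import sequences exp.
From mathcomp Require Import ring lra.
Import Order.TTheory GRing.Theory Num.Theory.
Local Open Scope ring_scope.
Set Implicit Arguments. Unset Strict Implicit. Unset Printing Implicit Defensive.
Section LinAlg.
Variables (R : realType) (n : nat).
Implicit Types (u v w x y : 'cV[R]_n) (M A B C : 'M[R]_n).

Lemma dotvE u v : dotv u v = (u^T *m v) 0 0.
Proof. by rewrite /dotv !mxE; apply: eq_bigr => i _; rewrite mxE. Qed.

Lemma dotvC u v : dotv u v = dotv v u.
Proof. by rewrite /dotv; apply: eq_bigr => i _; rewrite mulrC. Qed.

Lemma dotvDl u v w : dotv (u + w) v = dotv u v + dotv w v.
Proof. by rewrite /dotv -big_split; apply: eq_bigr => i _; rewrite mxE mulrDl. Qed.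

Lemma dotvDr u v w : dotv v (u + w) = dotv v u + dotv v w.
Proof. by rewrite dotvC dotvDl !(dotvC v). Qed.

Lemma dotvZl c u v : dotv (c *: u) v = c * dotv u v.
Proof. by rewrite /dotv mulr_sumr; apply: eq_bigr => i _; rewrite mxE mulrA. Qed.

Lemma dotvZr c u v : dotv v (c *: u) = c * dotv v u.
Proof. by rewrite dotvC dotvZl dotvC. Qed.

Lemma dotvNl u v : dotv (- u) v = - dotv u v.
Proof. by rewrite -scaleN1r dotvZl mulN1r. Qed.

Lemma dotvNr u v : dotv v (- u) = - dotv v u.
Proof. by rewrite dotvC dotvNl dotvC. Qed.

Lemma dotvBl u v w : dotv (u - w) v = dotv u v - dotv w v.
Proof. by rewrite dotvDl dotvNl. Qed.

Lemma dotvBr u v w : dotv v (u - w) = dotv v u - dotv v w.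
Proof. by rewrite dotvDr dotvNr. Qed.

Lemma dotv0l v : dotv 0 v = 0.
Proof. by rewrite /dotv big1 // => i _; rewrite mxE mul0r. Qed.

Lemma dotv0r v : dotv v 0 = 0.
Proof. by rewrite dotvC dotv0l. Qed.

Lemma dotv_suml (I : Type) (r : seq I) (P : pred I) (F : I -> 'cV[R]_n) v :
  dotv (\sum_(i <- r | P i) F i) v = \sum_(i <- r | P i) dotv (F i) v.
Proof. exact: (big_morph (fun u => dotv u v) (fun a b => dotvDl a v b) (dotv0l v)). Qed.

Lemma dotv_sumr (I : Type) (r : seq I) (P : pred I) (F : I -> 'cV[R]_n) v :
  dotv v (\sum_(i <- r | P i) F i) = \sum_(i <- r | P i) dotv v (F i).
Proof. rewrite dotvC dotv_suml; apply: eq_bigr => i _; exact: dotvC. Qed.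

Lemma dotv_mulmx u v M : dotv u (M *m v) = dotv (M^T *m u) v.
Proof. by rewrite !dotvE trmx_mul trmxK mulmxA. Qed.

Lemma dotv_ge0 u : 0 <= dotv u u.
Proof. by rewrite /dotv sumr_ge0 // => i _; rewrite -expr2 sqr_ge0. Qed.

Lemma dotv_gt0 u : u != 0 -> 0 < dotv u u.
Proof.
move=> u0; have [i hi] : exists i, u i 0 != 0.
  apply/existsP; apply: contraR u0 => /existsPn h; apply/eqP/matrixP => i j.
  rewrite (ord1 j) mxE; exact/eqP/negPn/h.
rewrite /dotv (bigD1 i) //= ltr_pwDl //.
  by rewrite -expr2 exprn_even_gt0 //.
by apply: sumr_ge0 => j _; rewrite -expr2 sqr_ge0.
Qed.

Definition sym M := M^T = M.
Definition psd M := forall x, 0 <= msqnorm M x.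
Definition good M := [/\ sym M, psd M & 0 < \det M].

Lemma qf_symE M u v : sym M -> dotv u (M *m v) = dotv v (M *m u).
Proof. by move=> sM; rewrite dotv_mulmx sM dotvC. Qed.

Lemma qfD M x y : sym M ->
  msqnorm M (x + y) = msqnorm M x + 2 * dotv x (M *m y) + msqnorm M y.
Proof.
move=> sM; rewrite /msqnorm mulmxDr !dotvDl !dotvDr (qf_symE y x sM); ring.
Qed.

Lemma qfZ M c x : msqnorm M (c *: x) = c ^+ 2 * msqnorm M x.
Proof. by rewrite /msqnorm -scalemxAr dotvZl dotvZr mulrA -expr2. Qed.

Lemma qfN M x : msqnorm M (- x) = msqnorm M x.
Proof. by rewrite -scaleN1r qfZ sqrrN expr1n mul1r. Qed.

Lemma qfB M x y : sym M ->
  msqnorm M (x - y) = msqnorm M x - 2 * dotv x (M *m y) + msqnorm M y.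
Proof. by move=> sM; rewrite qfD // qfN mulmxN dotvNr mulrN. Qed.

Lemma qf_addM A B x : msqnorm (A + B) x = msqnorm A x + msqnorm B x.
Proof. by rewrite /msqnorm mulmxDl dotvDr. Qed.

Lemma qf_scaleM c A x : msqnorm (c *: A) x = c * msqnorm A x.
Proof. by rewrite /msqnorm -scalemxAl dotvZr. Qed.

Lemma qf_sumM (I : Type) (r : seq I) (P : pred I) (F : I -> 'M[R]_n) x :
  msqnorm (\sum_(i <- r | P i) F i) x = \sum_(i <- r | P i) msqnorm (F i) x.
Proof.
apply: (big_morph (fun M => msqnorm M x) (fun a b => qf_addM a b x)).
by rewrite /msqnorm mul0mx dotv0r.
Qed.

Lemma rank1_mul v x : (v *m v^T) *m x = dotv v x *: v.
Proof.
rewrite -mulmxA [v^T *m x]mx11_scalar -dotvE.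
by rewrite -[dotv v x *: v]mul_mx_scalar.
Qed.

Lemma qf_rank1 v x : msqnorm (v *m v^T) x = dotv v x ^+ 2.
Proof. by rewrite /msqnorm rank1_mul dotvZr dotvC expr2. Qed.

Lemma qf_1 x : msqnorm 1%:M x = dotv x x.
Proof. by rewrite /msqnorm mul1mx. Qed.

Lemma qf_scalar c x : msqnorm c%:M x = c * dotv x x.
Proof. by rewrite /msqnorm mul_scalar_mx dotvZr. Qed.

Lemma sym_rank1 v : sym (v *m v^T).
Proof. by rewrite /sym trmx_mul trmxK. Qed.

Lemma sym_add A B : sym A -> sym B -> sym (A + B).
Proof. by rewrite /sym linearD /= => -> ->. Qed.

Lemma sym_scale c A : sym A -> sym (c *: A).
Proof. by rewrite /sym linearZ /= => ->. Qed.

Lemma sym_scalar c : sym c%:M.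
Proof. by rewrite /sym tr_scalar_mx. Qed.

Lemma sym_sum (I : Type) (r : seq I) (F : I -> 'M[R]_n) :
  (forall i, sym (F i)) -> sym (\sum_(i <- r) F i).
Proof.
move=> H; elim: r => [|i r IH]; first by rewrite big_nil /sym trmx0.
by rewrite big_cons; apply: sym_add.
Qed.

Lemma CS M x y : sym M -> psd M ->
  dotv x (M *m y) ^+ 2 <= msqnorm M x * msqnorm M y.
Proof.
move=> sM pM.
set a := msqnorm M x; set b := dotv x (M *m y); set c := msqnorm M y.
have H r : 0 <= a + 2 * r * b + r ^+ 2 * c.
  have := pM (x + r *: y); rewrite qfD // qfZ -scalemxAr dotvZr -/a -/c -/b.
  by rewrite mulrA.
have a0 : 0 <= a by exact: pM.
have c0 : 0 <= c by exact: pM.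
have [c_eq0|c_gt0] := eqVneq c 0.
  have [b_eq0|b_neq0] := eqVneq b 0.
    by rewrite b_eq0 c_eq0 expr0n /= mulr0.
  have e : 2 * (- (a + 1) / (2 * b)) * b = - (a + 1).
    by field.
  have := H (- (a + 1) / (2 * b)); rewrite e c_eq0 mulr0 addr0; lra.
have cp : 0 < c by rewrite lt_def c_gt0 c0.
have := H (- (b / c)).
set u := b / c.
have hu : b = u * c by rewrite /u divfK.
rewrite hu => h.
have : 0 <= a - u ^+ 2 * c by move: h; rewrite !expr2; lra.
move=> h2; rewrite expr2.
have : 0 <= (a - u ^+ 2 * c) * c by apply: mulr_ge0.
rewrite !expr2; nra.
Qed.

Lemma good_unit M : good M -> M \in unitmx.
Proof. by case=> _ _ d0; rewrite unitmxE unitfE gt_eqF. Qed.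

Lemma qf_inv M x : sym M -> M \in unitmx ->
  msqnorm (invmx M) x = msqnorm M (invmx M *m x).
Proof. by move=> sM uM; rewrite /msqnorm mulKVmx // dotvC. Qed.

Lemma sym_inv M : sym M -> sym (invmx M).
Proof. by rewrite /sym trmx_inv => ->. Qed.

Lemma psd_inv M : sym M -> psd M -> M \in unitmx -> psd (invmx M).
Proof. by move=> sM pM uM x; rewrite qf_inv. Qed.

Lemma CS_inv M u v : sym M -> psd M -> M \in unitmx ->
  dotv u v ^+ 2 <= msqnorm (invmx M) u * msqnorm M v.
Proof.
move=> sM pM uM.
have -> : dotv u v = dotv (invmx M *m u) (M *m v).
  by rewrite dotv_mulmx sM mulKVmx.
by rewrite qf_inv //; apply: CS.
Qed.

Lemma variational M x y : sym M -> psd M -> M \in unitmx ->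
  2 * dotv y x - msqnorm M y <= msqnorm (invmx M) x.
Proof.
move=> sM pM uM.
have := pM (y - invmx M *m x); rewrite qfB // mulKVmx // -qf_inv //; lra.
Qed.

Lemma mono_inv A B (s : R) x : sym A -> psd A -> A \in unitmx ->
  sym B -> psd B -> B \in unitmx -> 0 < s ->
  (forall z, msqnorm A z <= s * msqnorm B z) ->
  msqnorm (invmx B) x <= s * msqnorm (invmx A) x.
Proof.
move=> sA pA uA sB pB uB s0 le.
set y := s^-1 *: (invmx B *m x).
have h1 := variational x y sA pA uA.
have h2 := le y.
have e1 : dotv y x = s^-1 * msqnorm (invmx B) x.
  by rewrite /y dotvZl qf_inv // /msqnorm mulKVmx.
have e2 : msqnorm B y = s^-1 ^+ 2 * msqnorm (invmx B) x.
  by rewrite /y qfZ qf_inv.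
rewrite e1 in h1; rewrite e2 in h2.
set be := msqnorm (invmx B) x in h1 h2 *.
set al := msqnorm (invmx A) x in h1 *.
have : be / s <= al.
  have hs : s * (s^-1 ^+ 2 * be) = s^-1 * be by field; rewrite gt_eqF.
  rewrite hs in h2; rewrite mulrC; lra.
by rewrite -ler_pdivrMl // mulrC.
Qed.

End LinAlg.
Section Rank1.
Variables (R : realType) (n : nat).
Implicit Types (u v w x y : 'cV[R]_n) (M A B C : 'M[R]_n).

Lemma det_1rank1 u w : \det (1%:M + u *m w^T) = 1 + dotv w u.
Proof.
pose N : 'M[R]_(1 + n) := block_mx 1%:M (- w^T) u 1%:M.
have E1 : N = block_mx 1%:M 0 u 1%:M *m block_mx 1%:M (- w^T) 0 (1%:M + u *m w^T).
  rewrite mulmx_block; congr block_mx;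
    rewrite ?mul1mx ?mul0mx ?mulmx0 ?mulmx1 ?addr0 ?add0r //.
  by rewrite mulmxN addrC addrK.
have E2 : N = block_mx (1%:M + w^T *m u) (- w^T) 0 1%:M *m block_mx 1%:M 0 u 1%:M.
  rewrite mulmx_block; congr block_mx;
    rewrite ?mul1mx ?mul0mx ?mulmx0 ?mulmx1 ?addr0 ?add0r //.
  by rewrite mulNmx addrK.
have := congr1 determinant (etrans (esym E2) E1).
rewrite !det_mulmx !det_ublock !det_lblock !det1 !mul1r !mulr1 => <-.
rewrite det_mx11 !mxE eqxx; congr (_ + _).
by rewrite /dotv; apply: eq_bigr => j _; rewrite mxE.
Qed.

Lemma det_rank1 A c v : A \in unitmx ->
  \det (A + c *: (v *m v^T)) = \det A * (1 + c * msqnorm (invmx A) v).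
Proof.
move=> uA.
have -> : A + c *: (v *m v^T) = A *m (1%:M + (c *: (invmx A *m v)) *m v^T).
  rewrite mulmxDr mulmx1; congr (_ + _).
  by rewrite -scalemxAl -scalemxAr mulmxA mulKVmx.
by rewrite det_mulmx det_1rank1 dotvZr.
Qed.

Lemma qf_inv_ge0 A x : good A -> 0 <= msqnorm (invmx A) x.
Proof. by case=> sA pA dA; apply: psd_inv => //; apply: good_unit. Qed.

Lemma psd_rank1 c v : 0 <= c -> psd (c *: (v *m v^T)).
Proof. by move=> c0 x; rewrite qf_scaleM qf_rank1 mulr_ge0 // sqr_ge0. Qed.

Lemma psd_add A B : psd A -> psd B -> psd (A + B).
Proof. by move=> pA pB x; rewrite qf_addM addr_ge0. Qed.

Section Step.
Variables (A : 'M[R]_n) (c : R) (v : 'cV[R]_n).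
Hypotheses (gA : good A) (c0 : 0 <= c).
Let B := A + c *: (v *m v^T).
Let a := msqnorm (invmx A) v.
Let uA := good_unit gA.

Lemma a_ge0 : 0 <= a.
Proof. exact: qf_inv_ge0. Qed.

Lemma step_det : \det B = \det A * (1 + c * a).
Proof. exact: det_rank1. Qed.

Lemma step_good : good B.
Proof.
case: gA => sA pA dA; split.
- by apply: sym_add => //; apply/sym_scale/sym_rank1.
- by apply: psd_add => //; apply: psd_rank1.
- rewrite step_det mulr_gt0 //; have := mulr_ge0 c0 a_ge0; lra.
Qed.

Let uB := good_unit step_good.

Lemma step_qf x : msqnorm B x = msqnorm A x + c * dotv v x ^+ 2.
Proof. by rewrite qf_addM qf_scaleM qf_rank1. Qed.

Lemma step_le x : msqnorm A x <= msqnorm B x.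
Proof. by rewrite step_qf lerDl mulr_ge0 // sqr_ge0. Qed.

Lemma step_leB x : msqnorm B x <= (1 + c * a) * msqnorm A x.
Proof.
case: gA => sA pA dA.
rewrite step_qf.
have h := CS_inv v x sA pA uA.
rewrite -/a in h; have := ler_wpM2l c0 h; lra.
Qed.

Lemma step_inv x : msqnorm (invmx A) x <= (1 + c * a) * msqnorm (invmx B) x.
Proof.
have [sB pB dB] := step_good.
case: gA => sA pA dA.
set k := (1 + c * a)^-1.
have ha := a_ge0.
have hca := mulr_ge0 c0 a_ge0.
have hk : k * (1 + c * a) = 1 by rewrite /k mulVf // gt_eqF //; lra.
have k0 : 0 <= k by rewrite /k invr_ge0; lra.
set y := k *: (invmx A *m x).
have h := variational x y sB pB uB.
set al := msqnorm (invmx A) x.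
set ga := dotv v (invmx A *m x).
have e1 : dotv y x = k * al by rewrite /y dotvZl dotvC.
have e2 : msqnorm B y = k ^+ 2 * (al + c * ga ^+ 2).
  by rewrite /y qfZ step_qf -qf_inv // dotvZr exprMn mulrDr mulrA [c * _]mulrC -mulrA mulrDr !mulrA.
have hcs : ga ^+ 2 <= a * al by apply: CS; [exact: sym_inv | exact: psd_inv].
rewrite e1 e2 in h.
set be := msqnorm (invmx B) x in h *.
have al0 : 0 <= al by apply: qf_inv_ge0.
have h3 : k ^+ 2 * (c * ga ^+ 2) <= k ^+ 2 * (c * (a * al)).
  by apply: ler_wpM2l; [exact: sqr_ge0 | apply: ler_wpM2l].
have h4 : k * al <= be.
  have : k ^+ 2 * (al + c * (a * al)) = k * al.
    by transitivity (k * (k * (1 + c * a)) * al); [ring | rewrite hk mulr1].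
  move=> e; move: h; rewrite mulrDr; move: h3 e; rewrite mulrDr; lra.
have : (1 + c * a) * (k * al) <= (1 + c * a) * be by apply: ler_wpM2l => //; nra.
by rewrite mulrA [_ * k]mulrC hk mul1r.
Qed.

Lemma step_SM : msqnorm (invmx B) v * (1 + c * a) = a.
Proof.
case: gA => sA pA dA.
set w := invmx B *m v.
have Bw : B *m w = v by rewrite /w mulKVmx.
have Aw : A *m w = (1 - c * dotv v w) *: v.
  move: Bw; rewrite /B mulmxDl -scalemxAl rank1_mul scalerA => e.
  by rewrite scalerBl scale1r -{1}e addrK.
have ew : w = (1 - c * dotv v w) *: (invmx A *m v).
  by rewrite scalemxAr -Aw mulKmx.
have : dotv v w = (1 - c * dotv v w) * a.
  by rewrite {1}ew dotvZr.
rewrite /msqnorm -/w; move=> e; rewrite /a /msqnorm in e *; lra.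
Qed.

Lemma ln1Dx_ge (x : R) : 0 <= x -> x / (1 + x) <= ln (1 + x).
Proof.
move=> x0.
have p : 0 < 1 + x by lra.
have h := @le_ln1Dx R (- (x / (1 + x))).
have e : 1 + - (x / (1 + x)) = (1 + x)^-1 by field; rewrite gt_eqF.
rewrite e lnV ?posrE // in h.
have : -1 < - (x / (1 + x)).
  rewrite ltrN2 ltr_pdivrMr // mul1r; lra.
move=> /h; lra.
Qed.

Lemma step_ln : c * msqnorm (invmx B) v <= ln (\det B) - ln (\det A).
Proof.
case: gA => sA pA dA.
have ha := a_ge0.
have ca0 : 0 <= c * a by apply: mulr_ge0.
rewrite step_det lnM ?posrE //; last by lra.
rewrite addrAC subrr add0r.
have := ln1Dx_ge ca0.
have e : c * msqnorm (invmx B) v = c * a / (1 + c * a).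
  have hS := step_SM; set be := msqnorm (invmx B) v in hS *.
  rewrite -{1}hS; field; rewrite gt_eqF //; lra.
by rewrite e.
Qed.

End Step.

Definition Rel A B :=
  [/\ good A, good B, (forall x, msqnorm A x <= msqnorm B x),
      (forall x, msqnorm B x * \det A <= \det B * msqnorm A x) &
      (forall x, msqnorm (invmx A) x * \det A <= \det B * msqnorm (invmx B) x)].

Lemma Rel_refl A : good A -> Rel A A.
Proof. by move=> gA; split=> // x; rewrite mulrC. Qed.

Lemma Rel_trans A B C : Rel A B -> Rel B C -> Rel A C.
Proof.
case=> gA gB h1 h2 h3 [_ gC k1 k2 k3]; split => // x.
- exact: le_trans (h1 x) (k1 x).
- have dB : 0 < \det B by case: gB.
  have pA : 0 <= msqnorm A x by case: gA => _ p _; exact: p.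
  have dC : 0 < \det C by case: gC.
  have := k2 x; have := h2 x.
  move=> u1 u2.
  have : msqnorm C x * \det A * \det B <= \det C * msqnorm A x * \det B.
    have : msqnorm C x * \det B * \det A <= \det C * msqnorm B x * \det A.
      by apply: ler_wpM2r => //; case: gA => _ _ /ltW.
    move=> u3.
    have : \det C * (msqnorm B x * \det A) <= \det C * (\det B * msqnorm A x).
      by apply: ler_wpM2l => //; apply: ltW.
    move=> u4; nra.
  by rewrite ler_pM2r.
- have dB : 0 < \det B by case: gB.
  have dC : 0 < \det C by case: gC.
  have pB : 0 <= msqnorm (invmx C) x by apply: qf_inv_ge0.
  have u1 := h3 x; have u2 := k3 x.
  have : msqnorm (invmx A) x * \det A * \det B <= \det C * msqnorm (invmx C) x * \det B.
    have : msqnorm (invmx A) x * \det A * \det B <= \det B * msqnorm (invmx B) x * \det B.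
      by apply: ler_wpM2r => //; apply: ltW.
    have : \det B * (msqnorm (invmx B) x * \det B) <= \det B * (\det C * msqnorm (invmx C) x).
      by apply: ler_wpM2l => //; apply: ltW.
    nra.
  by rewrite ler_pM2r.
Qed.

Lemma Rel_step A c v : good A -> 0 <= c -> Rel A (A + c *: (v *m v^T)).
Proof.
move=> gA c0; split.
- exact: gA.
- exact: step_good.
- exact: step_le.
- move=> x; rewrite step_det // -mulrA mulrC.
  have dA : 0 < \det A by case: gA.
  by rewrite ler_pM2l //; apply: step_leB.
- move=> x; rewrite step_det // mulrC -mulrA.
  have dA : 0 < \det A by case: gA.
  by rewrite ler_pM2l //; apply: step_inv.
Qed.

Lemma Rel_chain (I : Type) (r : seq I) (c : I -> R) (v : I -> 'cV[R]_n) A :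
  good A -> (forall i, 0 <= c i) ->
  Rel A (A + \sum_(i <- r) c i *: (v i *m (v i)^T)).
Proof.
elim: r A => [|i r IH] A gA c0; first by rewrite big_nil addr0; apply: Rel_refl.
rewrite big_cons addrA; apply: Rel_trans (Rel_step (v i) gA (c0 i)) _.
by apply: IH => //; apply: step_good.
Qed.

Lemma ellip_chain (I : Type) (r : seq I) (c : I -> R) (v : I -> 'cV[R]_n) A C (s : R) :
  good A -> (forall i, 0 <= c i) -> sym C -> psd C -> C \in unitmx -> 0 < s ->
  (forall x, msqnorm (A + \sum_(i <- r) c i *: (v i *m (v i)^T)) x <= s * msqnorm C x) ->
  \sum_(i <- r) c i * msqnorm (invmx C) (v i) <=
  s * (ln (\det (A + \sum_(i <- r) c i *: (v i *m (v i)^T))) - ln (\det A)).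
Proof.
move=> + c0 sC pC uC s0.
elim: r A => [|i r IH] A gA hle; first by rewrite !big_nil addr0 subrr mulr0.
rewrite big_cons; rewrite big_cons addrA in hle *.
set A' := A + c i *: (v i *m (v i)^T) in hle *.
have gA' : good A' by apply: step_good.
have := IH A' gA' hle.
have [sA' pA' dA'] := gA'.
have hA' : forall z, msqnorm A' z <= s * msqnorm C z.
  move=> z; apply: le_trans (hle z).
  by case: (Rel_chain r v gA' c0).
have m := mono_inv (v i) sA' pA' (good_unit gA') sC pC uC s0 hA'.
have l := step_ln (v i) gA (c0 i).
rewrite -/A' in l.
have : c i * msqnorm (invmx C) (v i) <= c i * (s * msqnorm (invmx A') (v i)).
  by apply: ler_wpM2l.
move=> u1 u2.
have : s * (c i * msqnorm (invmx A') (v i)) <= s * (ln (\det A') - ln (\det A)).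
  by apply: ler_wpM2l => //; apply: ltW.
move: u1 u2; rewrite mulrCA; lra.
Qed.

End Rank1.
Section Hadamard.
Variable (R : realType).

Lemma dotv_col m1 m2 (u1 w1 : 'cV[R]_m1) (u2 w2 : 'cV[R]_m2) :
  dotv (col_mx u1 u2) (col_mx w1 w2) = dotv u1 w1 + dotv u2 w2.
Proof. by rewrite !dotvE tr_col_mx mul_row_col mxE. Qed.

Lemma qf_delta n (M : 'M[R]_n) i : msqnorm M (delta_mx i 0) = M i i.
Proof.
by rewrite /msqnorm dotvE trmx_delta mulmxA -rowE -colE !mxE.
Qed.

Lemma col_neq0d m1 m2 (y : 'cV[R]_m1) (x : 'cV[R]_m2) : x != 0 -> col_mx y x != 0.
Proof.
move=> x0; apply/eqP => /(congr1 dsubmx); rewrite col_mxKd linear0 => e.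
by move: x0; rewrite e eqxx.
Qed.

Lemma col_neq0u m1 m2 (y : 'cV[R]_m1) (x : 'cV[R]_m2) : y != 0 -> col_mx y x != 0.
Proof.
move=> y0; apply/eqP => /(congr1 usubmx); rewrite col_mxKu linear0 => e.
by move: y0; rewrite e eqxx.
Qed.

Lemma delta_neq0 n (i : 'I_n) : (delta_mx i 0 : 'cV[R]_n) != 0.
Proof.
apply/eqP => /matrixP/(_ i 0); rewrite !mxE !eqxx /= => /eqP.
by rewrite oner_eq0.
Qed.

Lemma one11_neq0 : (1%:M : 'M[R]_1) != 0.
Proof. by apply/eqP => /matrixP/(_ 0 0); rewrite !mxE eqxx /= => /eqP; rewrite oner_eq0. Qed.

Definition pd n (M : 'M[R]_n) := forall x, x != 0 -> 0 < msqnorm M x.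

Lemma hadamard n (M : 'M[R]_n) : sym M -> pd M -> \det M <= \prod_i M i i.
Proof.
elim: n M => [|n IH] M sM pM; first by rewrite det_mx00 big_ord0.
move: M sM pM; rewrite -[n.+1]/(1 + n)%N => M sM pM.
set a := ulsubmx M 0 0.
set b := ursubmx M; set c := dlsubmx M; set D := drsubmx M.
have hu : ulsubmx M = a%:M by rewrite [LHS]mx11_scalar.
have hc : c = b^T by rewrite /c /b trmx_ursub sM.
have hD : D^T = D by rewrite /D trmx_drsub sM.
have Mcol (y : 'cV_1) (x : 'cV_n) :
    M *m col_mx y x = col_mx (a *: y + b *m x) (c *m y + D *m x).
  by rewrite -{1}(submxK M) mul_block_col hu mul_scalar_mx.
have a0 : 0 < a.
  have := pM (col_mx 1%:M 0).
  rewrite /msqnorm Mcol !mulmx0 !addr0 dotv_col dotv0l addr0 dotvE.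
  rewrite tr_scalar_mx mul1mx !mxE eqxx mulr1n mulr1.
  by apply; apply: col_neq0u; exact: one11_neq0.
set Sc := D - a^-1 *: (c *m b).
have fact : M = block_mx 1%:M 0 (a^-1 *: c) 1%:M *m block_mx (ulsubmx M) b 0 Sc.
  rewrite -{1}(submxK M) mulmx_block; congr block_mx;
    rewrite ?mul1mx ?mul0mx ?mulmx0 ?addr0 ?add0r //.
  - by rewrite hu mul_mx_scalar scalerA mulfV ?gt_eqF // scale1r.
  - by rewrite -scalemxAl /Sc addrC subrK.
have detM : \det M = a * \det Sc.
  by rewrite {1}fact det_mulmx det_lblock det_ublock !det1 !mul1r hu det_scalar1.
have sS : sym Sc.
  rewrite /sym /Sc linearB /= hD linearZ /= trmx_mul hc trmxK; done.
have pS : pd Sc.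
  move=> x x0.
  pose y : 'cV_1 := - (a^-1 *: (b *m x)).
  have := pM (col_mx y x).
  have -> : msqnorm M (col_mx y x) = msqnorm Sc x.
    rewrite /msqnorm Mcol /y scalerN scalerA mulfV ?gt_eqF // scale1r addNr.
    rewrite dotv_col dotv0r add0r /Sc mulmxBl mulmxN -scalemxAr -scalemxAl.
    by rewrite -mulmxA addrC.
  by apply; apply: col_neq0d.
have hS := IH Sc sS pS.
have cb0 i : 0 <= (c *m b) i i.
  rewrite hc !mxE; apply: sumr_ge0 => j _; rewrite !mxE -expr2; exact: sqr_ge0.
have hdiag : \prod_i Sc i i <= \prod_i D i i.
  apply: ler_prod => i _; apply/andP; split.
    by rewrite -qf_delta ltW // pS // delta_neq0.
  have h := cb0 i; rewrite !mxE in h.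
  rewrite /Sc !mxE lerBlDr lerDl; apply: mulr_ge0 => //.
  by rewrite invr_ge0 ltW.
rewrite detM big_ord_recl.
have -> : M 0 0 = a.
  rewrite /a !mxE; have -> : lshift n (0 : 'I_1) = 0 by apply: val_inj.
  by [].
apply: le_trans (ler_wpM2l (ltW a0) (le_trans hS hdiag)) _.
rewrite ler_pM2l //.
have -> : \prod_i D i i = \prod_(i < n) M (lift 0 i) (lift 0 i).
  by apply: eq_bigr => i _; rewrite /D !mxE !rshift1.
by [].
Qed.
End Hadamard.
Section LogDet.
Variable (R : realType).

Lemma ln_prod (I : Type) (r : seq I) (F : I -> R) :
  (forall i, 0 < F i) -> ln (\prod_(i <- r) F i) = \sum_(i <- r) ln (F i).
Proof.
move=> F0; elim: r => [|i r IH]; first by rewrite !big_nil ln1.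
rewrite !big_cons lnM ?IH // posrE //.
by apply: prodr_gt0.
Qed.

Lemma ln_le_sub1 (x : R) : 0 < x -> ln x <= x - 1.
Proof.
move=> x0; have := @le_ln1Dx R (x - 1).
have -> : 1 + (x - 1) = x by ring.
apply; lra.
Qed.

Lemma logdet_bound n (M : 'M[R]_n) (tau : R) : (0 < n)%N -> sym M -> pd M ->
  0 < \det M -> \tr M <= tau -> ln (\det M) <= n%:R * ln (tau / n%:R).
Proof.
move=> n0 sM pM dM htr.
have dpos i : 0 < M i i by rewrite -qf_delta pM // delta_neq0.
have nR : 0 < n%:R :> R by rewrite ltr0n.
have tr0 : 0 < \tr M.
  rewrite /mxtrace; case: n n0 M sM pM dM htr dpos nR => // n' _ M _ _ _ _ dpos _.
  by rewrite big_ord_recl ltr_pwDl ?dpos // sumr_ge0 // => i _; apply: ltW.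
set mu := \tr M / n%:R.
have mu0 : 0 < mu by rewrite divr_gt0.
have h1 : ln (\det M) <= ln (\prod_i M i i).
  by rewrite ler_ln ?posrE ?prodr_gt0 //; apply: hadamard.
rewrite ln_prod // in h1.
have h2 : \sum_i ln (M i i) <= n%:R * ln mu.
  have : \sum_i (ln (M i i) - ln mu) <= \sum_i (M i i / mu - 1).
    apply: ler_sum => i _; rewrite -ln_div ?posrE //; apply: ln_le_sub1.
    by rewrite divr_gt0.
  rewrite !sumrB -mulr_suml -/(mxtrace M) /mu !sumr_const card_ord.
  have -> : \tr M / (\tr M / n%:R) = n%:R by field; rewrite !gt_eqF.
  rewrite -[_ *+ n]mulr_natl; lra.
have h3 : ln mu <= ln (tau / n%:R).
  by rewrite ler_ln ?posrE ?divr_gt0 // ?ler_pM2r ?invr_gt0 //; lra.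
have : n%:R * ln mu <= n%:R * ln (tau / n%:R) by rewrite ler_pM2l.
lra.
Qed.
End LogDet.
Section Sums.
Variable (R : realType).

Lemma wCS (I : Type) (r : seq I) (P : pred I) (w m : I -> R) :
  (forall i, P i -> 0 <= w i) ->
  (\sum_(i <- r | P i) w i * m i) ^+ 2 <=
  (\sum_(i <- r | P i) w i) * (\sum_(i <- r | P i) w i * m i ^+ 2).
Proof.
move=> w0; elim: r => [|i r IH]; first by rewrite !big_nil expr0n /= mul0r.
rewrite !big_cons; case: ifP => Pi //.
set S1 := \sum_(j <- r | P j) w j * m j in IH *.
set A1 := \sum_(j <- r | P j) w j in IH *.
set B1 := \sum_(j <- r | P j) w j * m j ^+ 2 in IH *.
have A0 : 0 <= A1 by apply: sumr_ge0.
have B0 : 0 <= B1.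
  by apply: sumr_ge0 => j Pj; apply: mulr_ge0; [exact: w0 | exact: sqr_ge0].
have wi := w0 i Pi.
set n0 := m i.
have key : 2 * n0 * S1 <= A1 * n0 ^+ 2 + B1.
  have h1 : (2 * n0 * S1) ^+ 2 <= (A1 * n0 ^+ 2 + B1) ^+ 2.
    have : 0 <= (A1 * n0 ^+ 2 - B1) ^+ 2 by apply: sqr_ge0.
    have : 4 * n0 ^+ 2 * S1 ^+ 2 <= 4 * n0 ^+ 2 * (A1 * B1).
      by apply: ler_wpM2l => //; apply: mulr_ge0 => //; apply: sqr_ge0.
    rewrite !expr2; nra.
  have p : 0 <= A1 * n0 ^+ 2 + B1 by apply: addr_ge0 => //; apply: mulr_ge0 => //; apply: sqr_ge0.
  move: h1 p; set X := 2 * n0 * S1; set Y := A1 * n0 ^+ 2 + B1.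
  rewrite !expr2; nra.
have := ler_wpM2l wi key.
rewrite !expr2 in IH key *; nra.
Qed.

Lemma sqrt_sum_le (I : Type) (r : seq I) (P : pred I) (V : I -> R) (X : R) :
  (forall i, P i -> 0 <= V i) -> \sum_(i <- r | P i) V i <= X ->
  \sum_(i <- r | P i) Num.sqrt (V i) <= Num.sqrt ((\sum_(i <- r | P i) 1) * X).
Proof.
move=> V0 hX.
have h := @wCS I r P (fun=> 1) (fun i => Num.sqrt (V i)) (fun _ _ => ler01).
have e : \sum_(i <- r | P i) 1 * Num.sqrt (V i) ^+ 2 = \sum_(i <- r | P i) V i.
  by apply: eq_bigr => i Pi; rewrite mul1r sqr_sqrtr // V0.
rewrite e in h.
have e2 : \sum_(i <- r | P i) 1 * Num.sqrt (V i) = \sum_(i <- r | P i) Num.sqrt (V i).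
  by apply: eq_bigr => i _; rewrite mul1r.
rewrite e2 in h.
have s0 : 0 <= \sum_(i <- r | P i) Num.sqrt (V i) by apply: sumr_ge0 => i _; apply: sqrtr_ge0.
have c0 : 0 <= \sum_(i <- r | P i) (1 : R) by apply: sumr_ge0 => i _; apply: ler01.
rewrite -(ger0_norm s0) -sqrtr_sqr.
rewrite ler_wsqrtr //; apply: le_trans h _; apply: ler_wpM2l => //.
Qed.

End Sums.

Section Seminorm.
Variables (R : realType) (n : nat).
Implicit Types (u v w x y : 'cV[R]_n) (M : 'M[R]_n).

Definition nrm M x := Num.sqrt (msqnorm M x).

Lemma abs_le_of_sqr (b X : R) : 0 <= X -> b ^+ 2 <= X ^+ 2 -> `|b| <= X.
Proof.
move=> X0 h; have e : `|b| ^+ 2 = b ^+ 2 by rewrite real_normK ?num_real.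
have := normr_ge0 b; rewrite -e in h; move: h; rewrite !expr2; nra.
Qed.

Lemma nrm_ge0 M x : 0 <= nrm M x.
Proof. exact: sqrtr_ge0. Qed.

Lemma nrm_sqr M x : psd M -> nrm M x ^+ 2 = msqnorm M x.
Proof. by move=> pM; rewrite sqr_sqrtr. Qed.

Lemma nrm_scale M c x : nrm M (c *: x) = `|c| * nrm M x.
Proof. by rewrite /nrm qfZ sqrtrM ?sqr_ge0 // sqrtr_sqr. Qed.

Lemma nrmN M x : nrm M (- x) = nrm M x.
Proof. by rewrite /nrm qfN. Qed.

Lemma nrm_dot M x y : sym M -> psd M -> `|dotv x (M *m y)| <= nrm M x * nrm M y.
Proof.
move=> sM pM.
apply: abs_le_of_sqr; first by rewrite mulr_ge0 ?nrm_ge0.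
by rewrite exprMn !nrm_sqr //; apply: CS.
Qed.

Lemma nrm_triangle M x y : sym M -> psd M -> nrm M (x + y) <= nrm M x + nrm M y.
Proof.
move=> sM pM.
have h := nrm_dot x y sM pM.
have h2 := ler_norm (dotv x (M *m y)).
have e : nrm M (x + y) ^+ 2 = nrm M x ^+ 2 + 2 * dotv x (M *m y) + nrm M y ^+ 2.
  by rewrite !nrm_sqr // qfD.
have := nrm_ge0 M (x + y); have := nrm_ge0 M x; have := nrm_ge0 M y.
move: e h h2; rewrite !expr2; nra.
Qed.

Lemma nrm_sum M (I : Type) (r : seq I) (P : pred I) (F : I -> 'cV[R]_n) :
  sym M -> psd M ->
  nrm M (\sum_(i <- r | P i) F i) <= \sum_(i <- r | P i) nrm M (F i).
Proof.
move=> sM pM; elim: r => [|i r IH].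
  by rewrite !big_nil /nrm /msqnorm mulmx0 dotv0r sqrtr0.
rewrite !big_cons; case: ifP => // _.
by apply: le_trans (nrm_triangle _ _ sM pM) _; rewrite lerD2l.
Qed.

Lemma dot_le_nrm M u v : sym M -> psd M -> M \in unitmx ->
  `|dotv u v| <= nrm (invmx M) u * nrm M v.
Proof.
move=> sM pM uM.
apply: abs_le_of_sqr; first by rewrite mulr_ge0 ?nrm_ge0.
rewrite exprMn !nrm_sqr //; last exact: psd_inv.
exact: CS_inv.
Qed.

End Seminorm.
Section MNLfacts.
Variables (R : realType) (S A : finType) (d : nat).
Variables (Sr : S -> A -> {set S}) (phi : S -> A -> S -> 'cV[R]_d).
Variables (s0 : S) (a0 : A).
Hypothesis hne : exists2 z, z \in Sr s0 a0 & phi s0 a0 z = 0.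

Local Notation I := (Sr s0 a0).
Local Notation ph := (phi s0 a0).
Local Notation p := (mnl_p Sr phi s0 a0).
Local Notation mn := (mnl_mean Sr phi s0 a0).

Lemma Z_gt0 (th : 'cV[R]_d) : 0 < \sum_(j in I) expR (dotv (ph j) th).
Proof.
case: hne => z zI _; rewrite (bigD1 z) //= ltr_pwDl ?expR_gt0 //.
by apply: sumr_ge0 => j _; apply: expR_ge0.
Qed.

Lemma p_gt0 th i : 0 < p th i.
Proof. by rewrite /mnl_p divr_gt0 ?expR_gt0 ?Z_gt0. Qed.

Lemma p_ge0 th i : 0 <= p th i.
Proof. exact/ltW/p_gt0. Qed.

Lemma p_sum1 th : \sum_(i in I) p th i = 1.
Proof.
by rewrite /mnl_p -mulr_suml mulfV // gt_eqF // Z_gt0.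
Qed.

Lemma p_le1 th i : i \in I -> p th i <= 1.
Proof.
move=> iI; rewrite -(p_sum1 th) (bigD1 i) //= lerDl.
by apply: sumr_ge0 => j _; apply: p_ge0.
Qed.

Lemma hess_decomp th : loss_hess Sr phi s0 a0 th =
  \sum_(i in I) p th i *: ((ph i - mn th) *m (ph i - mn th)^T).
Proof.
set m := mn th.
have e1 : \sum_(i in I) p th i *: (ph i *m m^T) = m *m m^T.
  rewrite {2}/m /mnl_mean mulmx_suml; apply: eq_bigr => i _.
  by rewrite scalemxAl.
have e2 : \sum_(i in I) p th i *: (m *m (ph i)^T) = m *m m^T.
  rewrite {3}/m /mnl_mean linear_sum /= mulmx_sumr; apply: eq_bigr => i _.
  by rewrite linearZ /= scalemxAr.
have e3 : \sum_(i in I) p th i *: (m *m m^T) = m *m m^T.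
  by rewrite -scaler_suml p_sum1 scale1r.
have e : forall i, p th i *: ((ph i - m) *m (ph i - m)^T) =
    p th i *: (ph i *m (ph i)^T) - p th i *: (ph i *m m^T)
    - p th i *: (m *m (ph i)^T) + p th i *: (m *m m^T).
  move=> i; rewrite linearB /= mulmxBl !mulmxBr.
  by rewrite !scalerBr opprB addrA addrAC.
rewrite (eq_bigr _ (fun i _ => e i)) big_split /= !sumrB e1 e2 e3.
by rewrite /loss_hess -/m; rewrite subrK.
Qed.

Lemma qf_hess th x : msqnorm (loss_hess Sr phi s0 a0 th) x =
  \sum_(i in I) p th i * dotv (ph i) x ^+ 2 - dotv (mn th) x ^+ 2.
Proof.
rewrite /loss_hess /msqnorm mulmxBl dotvBr /= mulmx_suml dotv_sumr.
rewrite -/(msqnorm _ x) qf_rank1; congr (_ - _); apply: eq_bigr => i _.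
by rewrite -scalemxAl dotvZr -/(msqnorm _ x) qf_rank1.
Qed.

Lemma sym_hess th : sym (loss_hess Sr phi s0 a0 th).
Proof.
rewrite hess_decomp -big_enum /=; apply: sym_sum => i.
exact/sym_scale/sym_rank1.
Qed.

Lemma psd_hess th : psd (loss_hess Sr phi s0 a0 th).
Proof.
move=> x; rewrite hess_decomp qf_sumM; apply: sumr_ge0 => i _.
exact: psd_rank1 (p_ge0 _ _) x.
Qed.

Lemma norm2_nrm (x : 'cV[R]_d) : norm2 x = nrm 1%:M x.
Proof. by rewrite /nrm qf_1. Qed.

Lemma dotv_norm2 (x : 'cV[R]_d) : dotv x x = norm2 x ^+ 2.
Proof. by rewrite /norm2 sqr_sqrtr // dotv_ge0. Qed.

Lemma sym1 : sym (1%:M : 'M[R]_d).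
Proof. exact: sym_scalar. Qed.

Lemma psd1 : psd (1%:M : 'M[R]_d).
Proof. by move=> x; rewrite qf_1 dotv_ge0. Qed.

Lemma dot_le_norm2 (u v : 'cV[R]_d) : `|dotv u v| <= norm2 u * norm2 v.
Proof.
have := nrm_dot u v sym1 psd1; rewrite mul1mx -!norm2_nrm //.
Qed.

Variable (L : R).
Hypothesis hL : forall z, norm2 (ph z) <= L.

Lemma L_ge0 : 0 <= L.
Proof. by case: hne => z _ _; apply: le_trans (hL z); apply: sqrtr_ge0. Qed.

Lemma dotvphph z : dotv (ph z) (ph z) <= L ^+ 2.
Proof.
rewrite dotv_norm2; have := hL z; have := sqrtr_ge0 (dotv (ph z) (ph z)).
rewrite -/(norm2 _) => h1 h2; rewrite !expr2; nra.
Qed.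

Lemma qf_hess_le th x : msqnorm (loss_hess Sr phi s0 a0 th) x <= L ^+ 2 * dotv x x.
Proof.
rewrite qf_hess.
have h : \sum_(i in I) p th i * dotv (ph i) x ^+ 2 <= L ^+ 2 * dotv x x.
  rewrite -[X in _ <= X]mul1r -(p_sum1 th) mulr_suml.
  apply: ler_sum => i _; apply: ler_wpM2l; first exact: p_ge0.
  have h1 := dot_le_norm2 (ph i) x.
  have h3 : `|dotv (ph i) x| <= L * norm2 x.
    exact: le_trans h1 (ler_wpM2r (sqrtr_ge0 _) (hL i)).
  have e : dotv (ph i) x ^+ 2 = `|dotv (ph i) x| ^+ 2 by rewrite real_normK ?num_real.
  rewrite e [dotv x x]dotv_norm2 -exprMn.
  have h0 := normr_ge0 (dotv (ph i) x).
  move: h3 h0; rewrite !expr2; nra.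
have := sqr_ge0 (dotv (mn th) x); lra.
Qed.

Lemma tr_rank1 (u : 'cV[R]_d) : \tr (u *m u^T) = dotv u u.
Proof. by rewrite mxtrace_mulC /mxtrace big_ord1 -dotvE. Qed.

Lemma tr_hess_le th : \tr (loss_hess Sr phi s0 a0 th) <= L ^+ 2.
Proof.
rewrite /loss_hess raddfB /= raddf_sum /= tr_rank1.
have h : \sum_(i in I) \tr (p th i *: (ph i *m (ph i)^T)) <= L ^+ 2.
  rewrite -[X in _ <= X]mul1r -(p_sum1 th) mulr_suml.
  apply: ler_sum => i _; rewrite mxtraceZ tr_rank1; apply: ler_wpM2l.
    exact: p_ge0.
  exact: dotvphph.
have := dotv_ge0 (mn th); lra.
Qed.

Lemma mean_norm th : norm2 (mn th) <= L.
Proof.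
rewrite norm2_nrm /mnl_mean; apply: le_trans (nrm_sum _ _ _ sym1 psd1) _.
apply: (@le_trans _ _ (\sum_(i in I) p th i * L)); last first.
  by rewrite -mulr_suml p_sum1 mul1r.
apply: ler_sum => i _; rewrite nrm_scale ger0_norm ?p_ge0 // -norm2_nrm.
by apply: ler_wpM2l; [exact: p_ge0 | exact: hL].
Qed.

Lemma grad_norm th z : norm2 (loss_grad Sr phi s0 a0 z th) <= 2 * L.
Proof.
rewrite norm2_nrm /loss_grad; apply: le_trans (nrm_triangle _ _ sym1 psd1) _.
rewrite nrmN -!norm2_nrm; have := mean_norm th; have := hL z; lra.
Qed.

Lemma ratio_abs (u v g Mb : R) : 0 <= u <= 1 -> 0 <= v <= 1 -> 0 < g ->
  0 <= Mb -> 1 - Mb <= g^-1 -> u <= v * g -> v <= u * g -> `|u - v| <= Mb.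
Proof.
move=> /andP[u0 u1] /andP[v0 v1] g0 M0 hg h1 h2.
have e : g * g^-1 = 1 by rewrite mulfV ?gt_eqF.
have ig0 : 0 < g^-1 by rewrite invr_gt0.
have h1' : u * g^-1 <= v.
  have := ler_wpM2r (ltW ig0) h1; rewrite -mulrA e mulr1 //.
have h2' : v * g^-1 <= u.
  have := ler_wpM2r (ltW ig0) h2; rewrite -mulrA e mulr1 //.
rewrite ler_norml; apply/andP; split.
- have : v * (1 - Mb) <= v * g^-1 by apply: ler_wpM2l.
  nra.
- have : u * (1 - Mb) <= u * g^-1 by apply: ler_wpM2l.
  nra.
Qed.

Lemma softmax_lip th th' i Mb : i \in I -> 0 <= Mb ->
  (forall j, j \in I -> `|(dotv (ph j) th' - dotv (ph j) th)
                         - (dotv (ph i) th' - dotv (ph i) th)| <= Mb) ->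
  `|p th' i - p th i| <= Mb.
Proof.
move=> iI M0 hM.
set del := fun j => dotv (ph j) th' - dotv (ph j) th.
set e := fun j => expR (dotv (ph j) th).
have eE j : expR (dotv (ph j) th') = e j * expR (del j).
  by rewrite -expRD /del addrC subrK.
set Z := \sum_(j in I) e j.
set Z' := \sum_(j in I) expR (dotv (ph j) th').
have Z0 : 0 < Z by apply: Z_gt0.
have Z'0 : 0 < Z' by apply: Z_gt0.
set g := expR Mb.
have g0 : 0 < g by apply: expR_gt0.
set a := expR (del i).
have apos : 0 < a by apply: expR_gt0.
have hZ1 : Z' <= a * g * Z.
  rewrite /Z' mulr_sumr; apply: ler_sum => j jI; rewrite eE [e j * _]mulrC ler_pM2r ?expR_gt0 //.
  rewrite /a /g -expRD ler_expR.
  have := hM j jI; rewrite -/(del j) -/(del i) ler_norml => /andP[_]; lra.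
have hZ2 : a * Z <= g * Z'.
  rewrite /Z' mulr_sumr mulr_sumr; apply: ler_sum => j jI.
  rewrite eE mulrCA [a * e j]mulrC ler_pM2l ?expR_gt0 //.
  rewrite /a /g -expRD ler_expR.
  have := hM j jI; rewrite -/(del j) -/(del i) ler_norml => /andP[h _]; lra.
have E0 : 0 < e i by apply: expR_gt0.
have ep' : p th' i * Z' = e i * a by rewrite /mnl_p divfK ?gt_eqF // eE.
have eq : p th i * Z = e i by rewrite /mnl_p divfK ?gt_eqF.
apply: ratio_abs.
- by rewrite p_ge0 p_le1.
- by rewrite p_ge0 p_le1.
- exact: g0.
- exact: M0.
- by rewrite /g -expRN; have := expR_ge1Dx (- Mb); lra.
- have ZZ : 0 < Z' * Z by apply: mulr_gt0.
  rewrite -(ler_pM2r ZZ).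
  have -> : p th' i * (Z' * Z) = (p th' i * Z') * Z by ring.
  have -> : p th i * g * (Z' * Z) = (p th i * Z) * (g * Z') by ring.
  rewrite ep' eq -mulrA ler_pM2l //.
- have ZZ : 0 < Z' * Z by apply: mulr_gt0.
  rewrite -(ler_pM2r ZZ).
  have -> : p th i * (Z' * Z) = (p th i * Z) * Z' by ring.
  have -> : p th' i * g * (Z' * Z) = (p th' i * Z') * (g * Z) by ring.
  rewrite ep' eq -mulrA ler_pM2l //.
  by rewrite mulrA.
Qed.

Lemma le_add_dist (x y : R) : x <= y + `|y - x|.
Proof. have := ler_norm (y - x); rewrite distrC; have := ler_norm (x - y); lra. Qed.

Lemma pair_bound (kappa qi qj ni nj : R) : 0 < kappa -> kappa <= qi * qj ->
  0 <= ni -> 0 <= nj ->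
  kappa * (ni ^+ 2 + ni * nj) <= qi * qj * (3 / 2 * ni ^+ 2 + 1 / 2 * nj ^+ 2).
Proof.
move=> k0 hk ni0 nj0.
have hx : ni * nj <= 1 / 2 * ni ^+ 2 + 1 / 2 * nj ^+ 2.
  have := sqr_ge0 (ni - nj); rewrite !expr2; lra.
have p0 : 0 <= 3 / 2 * ni ^+ 2 + 1 / 2 * nj ^+ 2.
  by apply: addr_ge0; apply: mulr_ge0; rewrite ?sqr_ge0 //; lra.
apply: le_trans (_ : kappa * (3 / 2 * ni ^+ 2 + 1 / 2 * nj ^+ 2) <= _).
  apply: ler_wpM2l; first lra.
  lra.
exact: ler_wpM2r.
Qed.

Lemma single_le_sum (f : S -> R) j : j \in I -> (forall k, k \in I -> 0 <= f k) ->
  f j <= \sum_(k in I) f k.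
Proof.
move=> jI f0; rewrite (bigD1 j) //= lerDl; apply: sumr_ge0 => k /andP[kI _].
exact: f0.
Qed.

Lemma bonus_core (M : 'M[R]_d) (th' th : 'cV[R]_d) (kappa : R) :
  sym M -> psd M -> M \in unitmx -> 0 < kappa ->
  (forall i j, i \in I -> j \in I -> kappa <= p th i * p th j) ->
  \sum_(i in I) p th' i * nrm (invmx M) (ph i - mn th') <=
  Num.sqrt (\sum_(i in I) p th i * msqnorm (invmx M) (ph i - mn th))
  + 4 * nrm M (th' - th) *
      (\sum_(i in I) p th i * msqnorm (invmx M) (ph i - mn th)) / kappa.
Proof.
move=> sM pM uM k0 hk.
have sMi := sym_inv sM; have pMi := psd_inv sM pM uM.
set N := nrm (invmx M).
set z := fun i => ph i - mn th.
set V := \sum_(i in I) p th i * msqnorm (invmx M) (ph i - mn th).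
set D := nrm M (th' - th).
have D0 : 0 <= D by apply: nrm_ge0.
have N0 x : 0 <= N x by apply: nrm_ge0.
set E := \sum_(j in I) `|p th j - p th' j| * N (z j).
have hB : mn th - mn th' = \sum_(j in I) (p th j - p th' j) *: z j.
  have e j : (p th j - p th' j) *: z j =
      (p th j *: ph j - p th' j *: ph j) - (p th j - p th' j) *: mn th.
    by rewrite /z scalerBr scalerBl.
  rewrite (eq_bigr _ (fun j _ => e j)) sumrB sumrB -scaler_suml sumrB !p_sum1.
  by rewrite subrr scale0r subr0.
have hE : N (mn th - mn th') <= E.
  rewrite hB; apply: le_trans (nrm_sum _ _ _ sMi pMi) _.
  by apply: ler_sum => j _; rewrite nrm_scale.
have hy i : N (ph i - mn th') <= N (z i) + N (mn th - mn th').
  have -> : ph i - mn th' = z i + (mn th - mn th') by rewrite /z addrA subrK.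
  exact: nrm_triangle.
have E0 : 0 <= E by apply: sumr_ge0 => j _; rewrite mulr_ge0.
have h1 : \sum_(i in I) p th' i * N (ph i - mn th') <=
          \sum_(i in I) p th' i * N (z i) + E.
  apply: le_trans (_ : \sum_(i in I) (p th' i * N (z i) + p th' i * E) <= _).
    apply: ler_sum => i _; rewrite -mulrDr; apply: ler_wpM2l; first exact: p_ge0.
    exact: le_trans (hy i) (lerD (lexx _) hE).
  by rewrite big_split /= -mulr_suml p_sum1 mul1r.
have h2 : \sum_(i in I) p th' i * N (z i) <= \sum_(i in I) p th i * N (z i) + E.
  rewrite /E -big_split /=; apply: ler_sum => i _.
  rewrite -mulrDl; apply: ler_wpM2r => //; exact: le_add_dist.
have h3 : \sum_(i in I) p th i * N (z i) <= Num.sqrt V.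
  have h := @wCS R S (index_enum S) (fun i => i \in I) (p th) (fun i => N (z i))
              (fun i _ => p_ge0 th i).
  rewrite p_sum1 mul1r in h.
  have eV : \sum_(i in I) p th i * N (z i) ^+ 2 = V.
    by apply: eq_bigr => i _; rewrite /N nrm_sqr.
  rewrite eV in h.
  have s0' : 0 <= \sum_(i in I) p th i * N (z i).
    by apply: sumr_ge0 => i _; rewrite mulr_ge0 ?p_ge0.
  by rewrite -(ger0_norm s0') -sqrtr_sqr ler_wsqrtr.
have hpq i : i \in I -> `|p th i - p th' i| <= D * \sum_(j in I) (N (z i) + N (z j)).
  move=> iI; rewrite distrC; apply: softmax_lip => //.
    by rewrite mulr_ge0 // sumr_ge0 // => j _; rewrite addr_ge0.
  move=> j jI.
  have -> : dotv (ph j) th' - dotv (ph j) th - (dotv (ph i) th' - dotv (ph i) th)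
            = dotv (z j - z i) (th' - th).
    by rewrite /z !dotvBl !dotvBr; ring.
  apply: le_trans (dot_le_nrm _ _ sM pM uM) _; rewrite -/N -/D mulrC.
  apply: ler_wpM2l => //.
  apply: le_trans (nrm_triangle _ _ sMi pMi) _; rewrite nrmN -/N addrC.
  exact: (@single_le_sum (fun k => N (z i) + N (z k)) j jI
            (fun k _ => addr_ge0 (N0 _) (N0 _))).
have hE2 : kappa * E <= 2 * D * V.
  have hE1 : E <= D * \sum_(i in I) \sum_(j in I) (N (z i) ^+ 2 + N (z i) * N (z j)).
    rewrite mulr_sumr; apply: ler_sum => i iI.
    apply: le_trans (ler_wpM2r (N0 _) (hpq i iI)) _.
    rewrite -mulrA mulr_suml; apply: ler_wpM2l => //.
    rewrite (eq_bigr (fun j => N (z i) ^+ 2 + N (z i) * N (z j))) //.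
    by move=> j _; rewrite mulrDl -expr2 mulrC.
  have hK : kappa * \sum_(i in I) \sum_(j in I) (N (z i) ^+ 2 + N (z i) * N (z j))
            <= 2 * V.
    rewrite mulr_sumr.
    apply: (@le_trans _ _ (\sum_(i in I) \sum_(j in I) (p th i * p th j *
              (3 / 2 * N (z i) ^+ 2 + 1 / 2 * N (z j) ^+ 2)))).
      apply: ler_sum => i iI; rewrite mulr_sumr; apply: ler_sum => j jI.
      exact: pair_bound k0 (hk i j iI jI) (N0 _) (N0 _).
    have inner i : \sum_(j in I) p th i * p th j * (3 / 2 * N (z i) ^+ 2 + 1 / 2 * N (z j) ^+ 2)
        = 3 / 2 * (p th i * N (z i) ^+ 2) + 1 / 2 * p th i * V.
      rewrite (eq_bigr (fun j => 3 / 2 * (p th i * N (z i) ^+ 2) * p th j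
                       + 1 / 2 * p th i * (p th j * N (z j) ^+ 2))); last first.
        by move=> j _; ring.
      rewrite big_split /= -mulr_sumr -mulr_sumr p_sum1 mulr1; congr (_ + _).
      by congr (_ * _); apply: eq_bigr => j _; rewrite /N nrm_sqr.
    rewrite (eq_bigr _ (fun i _ => inner i)) big_split /=.
    have -> : \sum_(i in I) 3 / 2 * (p th i * N (z i) ^+ 2) = 3 / 2 * V.
      rewrite -mulr_sumr; congr (_ * _).
      by apply: eq_bigr => i _; rewrite /N nrm_sqr.
    have -> : \sum_(i in I) 1 / 2 * p th i * V = 1 / 2 * V.
      by rewrite -mulr_suml -mulr_sumr p_sum1 mulr1.
    have -> : 3 / 2 * V + 1 / 2 * V = 2 * V by field.
    exact: lexx.
  apply: le_trans (ler_wpM2l (ltW k0) hE1) _.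
  have -> : 2 * D * V = D * (2 * V) by ring.
  by rewrite mulrCA; apply: ler_wpM2l.
have hE3 : E <= 2 * D * V / kappa.
  by rewrite ler_pdivlMr // mulrC.
rewrite -/V.
have -> : 4 * D * V / kappa = 2 * (2 * D * V / kappa) by ring.
apply: le_trans h1 _; rewrite mulr2n.
apply: le_trans (lerD h2 (lexx E)) _.
rewrite mulrDl mul1r addrA; apply: lerD; last exact: hE3.
by apply: lerD.
Qed.

End MNLfacts.

Set Implicit Arguments. Unset Strict Implicit.
Lemma omd_arith (R : realType) (b Q c n eta : R) : 0 < eta ->
  b + (2 * eta)^-1 * Q <= 0 -> `|b| <= c * n -> Q <= 2 * eta * (c * n).
Proof.
move=> e0 h hb.
have e : Q = (2 * eta) * ((2 * eta)^-1 * Q) by field; rewrite gt_eqF.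
have hb' := ler_norm (- b); rewrite normrN in hb'.
have u : (2 * eta)^-1 * Q <= c * n by lra.
by rewrite e; apply: ler_wpM2l => //; lra.
Qed.

Lemma omd_final (R : realType) (X n c lam : R) : 0 < lam -> 0 <= c -> 0 <= n ->
  X <= c * n -> lam * n ^+ 2 <= X -> Num.sqrt X <= c / Num.sqrt lam.
Proof.
move=> l0 c0 n0 h1 h2.
have X0 : 0 <= X by apply: le_trans h2; apply: mulr_ge0 => //; [exact: ltW | exact: sqr_ge0].
have h3 : lam * X <= c ^+ 2.
  have [->|Xp] := eqVneq X 0; first by rewrite mulr0 sqr_ge0.
  have Xpos : 0 < X by rewrite lt_def Xp X0.
  have h4 : X ^+ 2 <= (c * n) ^+ 2.
    by rewrite !expr2; apply: ler_pM => //.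
  have h5 : lam * X ^+ 2 <= c ^+ 2 * X.
    apply: le_trans (ler_wpM2l (ltW l0) h4) _.
    rewrite exprMn mulrCA; apply: ler_wpM2l; first exact: sqr_ge0.
    exact: h2.
  rewrite -(ler_pM2r Xpos); move: h5; rewrite expr2 mulrA //.
have sl : 0 < Num.sqrt lam by rewrite sqrtr_gt0.
have hc : 0 <= c / Num.sqrt lam by apply: divr_ge0 => //; exact: ltW.
rewrite -(ger0_norm hc) -sqrtr_sqr; apply: ler_wsqrtr.
rewrite exprMn exprVn sqr_sqrtr; last exact: ltW.
by rewrite ler_pdivlMr // mulrC.
Qed.

Lemma sqrt_le2 (R : realType) (x y : R) : 0 <= y -> x <= 2 * y ->
  Num.sqrt x <= Num.sqrt 2 * Num.sqrt y.
Proof. by move=> y0 h; rewrite -sqrtrM ?ler0n // ler_wsqrtr. Qed.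

Lemma sqrt_sum_nat (R : realType) (m n : nat) (V : nat -> R) (X : R) :
  (forall i, (m <= i < n)%N -> 0 <= V i) -> \sum_(m <= i < n) V i <= X ->
  \sum_(m <= i < n) Num.sqrt (V i) <= Num.sqrt ((n - m)%:R * X).
Proof.
move=> V0 hX.
have e : (n - m)%:R = \sum_(m <= i < n | (m <= i < n)%N && true) (1 : R).
  by rewrite -big_nat_cond sumr_const_nat.
rewrite e big_nat_cond; rewrite big_nat_cond in hX.
by apply: sqrt_sum_le => // i /andP[/V0].
Qed.

Lemma final_arith (R : realType) (b bt r2 sl k dd l TT e L SV SSQ : R) :
  0 <= bt -> bt <= b -> r2 ^+ 2 = 2 -> 0 <= r2 -> 0 < sl -> 0 < k -> 0 <= dd -> 0 <= l ->
  0 <= TT -> 0 < e -> 0 <= L -> 0 <= SV ->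
  SV <= 2 * (dd * l) -> SSQ <= Num.sqrt (TT * (2 * (dd * l))) ->
  b * (r2 * SSQ + 4 * r2 * ((r2 + 1) * bt + 4 * e * L / sl) / k * SV) <=
  b * ((32 * b / k + 128 * r2 * L * e / (k * sl)) * dd * l
       + 2 * Num.sqrt (dd * TT * l)).
Proof.
move=> bt0 hbt hr2 r20 sl0 k0 d0 l0 T0 e0 L0 SV0 hSV hSSQ.
have b0 : 0 <= b by apply: le_trans hbt.
apply: ler_wpM2l => //.
have hr2le : r2 <= 2 by move: hr2; rewrite expr2 => h; nra.
have w0 : 0 <= e * L / sl by apply: divr_ge0; [apply: mulr_ge0; [exact: ltW|] | exact: ltW].
set w := e * L / sl in w0.
have C0 : 0 <= 4 * r2 * ((r2 + 1) * bt + 4 * w) / k.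
  apply: divr_ge0; last exact: ltW.
  apply: mulr_ge0; first by apply: mulr_ge0.
  apply: addr_ge0; [apply: mulr_ge0 => //; lra | lra].
have e1 : 4 * e * L / sl = 4 * w by rewrite /w !mulrA.
rewrite e1 [X in _ <= X]addrC.
apply: lerD.
  have e2 : Num.sqrt (TT * (2 * (dd * l))) = r2 * Num.sqrt (dd * TT * l).
    have -> : TT * (2 * (dd * l)) = 2 * (dd * TT * l) by ring.
    rewrite sqrtrM ?ler0n //; congr (_ * _).
    by rewrite -hr2 sqrtr_sqr ger0_norm.
  rewrite e2 in hSSQ.
  apply: le_trans (ler_wpM2l r20 hSSQ) _.
  have -> : r2 * (r2 * Num.sqrt (dd * TT * l)) = r2 ^+ 2 * Num.sqrt (dd * TT * l) by ring.
  by rewrite hr2.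
apply: le_trans (ler_wpM2l C0 hSV) _.
have u0 : 0 <= dd * l / k by apply: divr_ge0; [apply: mulr_ge0 | exact: ltW].
have -> : 4 * r2 * ((r2 + 1) * bt + 4 * w) / k * (2 * (dd * l)) =
          (8 * (r2 ^+ 2 + r2) * bt + 32 * r2 * w) * (dd * l / k) by ring.
have -> : (32 * b / k + 128 * r2 * L * e / (k * sl)) * dd * l =
          (32 * b + 128 * r2 * w) * (dd * l / k).
  by rewrite /w; field; rewrite !gt_eqF.
apply: ler_wpM2r => //; rewrite hr2.
apply: lerD.
  have : 8 * (2 + r2) * bt <= 32 * bt by apply: ler_wpM2r => //; lra.
  move=> h; apply: le_trans h _; apply: ler_wpM2l => //; lra.
apply: ler_wpM2r => //; apply: ler_wpM2r => //; lra.
Qed.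

Section Main.
Variables (R : realType) (S A : finType) (d : nat)
  (Sr : S -> A -> {set S}) (phi : S -> A -> S -> 'cV[R]_d)
  (theta_star : 'cV[R]_d) (Lphi Ltheta kappa lambda eta : R) (T : nat)
  (s : nat -> S) (a : nat -> A) (theta_hat : nat -> 'cV[R]_d)
  (Sigma : nat -> 'M[R]_d) (K : nat) (tk : nat -> nat) (beta : nat -> R).
Hypotheses (hd : (0 < d)%N) (hT : (0 < T)%N)
  (hphi : forall x y z, norm2 (phi x y z) <= Lphi)
  (hts : norm2 theta_star <= Ltheta)
  (hk : 0 < kappa < 1)
  (hA2 : forall t, (1 <= t <= T)%N -> forall th, norm2 th <= Ltheta ->
     forall s' s'', s' \in Sr (s t) (a t) -> s'' \in Sr (s t) (a t) ->
       kappa <= mnl_p Sr phi (s t) (a t) th s' * mnl_p Sr phi (s t) (a t) th s'')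
  (hA3 : forall x y, exists2 z, z \in Sr x y & phi x y z = 0)
  (heta : 0 < eta) (hlam : 0 < lambda)
  (hth1 : theta_hat 1%N = 0)
  (hS1 : Sigma 1%N = lambda%:M)
  (hSrec : forall t, (1 <= t <= T)%N ->
     Sigma t.+1 = Sigma t + loss_hess Sr phi (s t) (a t) (theta_hat t.+1))
  (hOMD : forall t, (1 <= t <= T)%N ->
     norm2 (theta_hat t.+1) <= Ltheta /\
     forall th, norm2 th <= Ltheta ->
       omd_obj eta (loss_grad Sr phi (s t) (a t) (s t.+1) (theta_hat t))
               (Sigma t + eta *: loss_hess Sr phi (s t) (a t) (theta_hat t))
               (theta_hat t) (theta_hat t.+1)
       <= omd_obj eta (loss_grad Sr phi (s t) (a t) (s t.+1) (theta_hat t))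
               (Sigma t + eta *: loss_hess Sr phi (s t) (a t) (theta_hat t))
               (theta_hat t) th)
  (hK1 : (1 <= K)%N) (htk1 : tk 1%N = 1%N) (htkK : tk K.+1 = T.+1)
  (htkinc : forall k, (1 <= k <= K)%N -> (tk k < tk k.+1)%N)
  (hdet : forall k t, (1 <= k <= K)%N -> (tk k < t < tk k.+1)%N ->
     \det (Sigma t) <= 2 * \det (Sigma (tk k)))
  (hb0 : forall t, 0 < beta t)
  (hbm : forall t t', (t <= t')%N -> beta t <= beta t')
  (hconf : forall t, (1 <= t <= T)%N ->
     mnorm (Sigma t) (theta_hat t - theta_star) <= beta t)
  (hlL : Lphi ^+ 2 <= lambda).

Local Notation I t := (Sr (s t) (a t)).
Local Notation q t := (mnl_p Sr phi (s t) (a t) (theta_hat t.+1)).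
Local Notation z t i := (phi (s t) (a t) i - mnl_mean Sr phi (s t) (a t) (theta_hat t.+1)).
Definition Vt t := \sum_(i in I t) q t i * msqnorm (invmx (Sigma t)) (z t i).

Let hne t : exists2 z, z \in Sr (s t) (a t) & phi (s t) (a t) z = 0 := hA3 _ _.
Let hL t : forall z, norm2 (phi (s t) (a t) z) <= Lphi := hphi _ _.

Lemma Sig_step t : (1 <= t <= T)%N ->
  Sigma t.+1 = Sigma t + \sum_(i <- enum (I t)) q t i *: (z t i *m (z t i)^T).
Proof. by move=> ht; rewrite hSrec // (hess_decomp (hne t)) big_enum. Qed.

Lemma good1 : good (lambda%:M : 'M[R]_d).
Proof.
split; first exact: sym_scalar.
- by move=> x; rewrite qf_scalar; apply: mulr_ge0; [exact: ltW | exact: dotv_ge0].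
- by rewrite det_scalar; apply: exprn_gt0.
Qed.

Lemma good_Sig t : (1 <= t <= T.+1)%N -> good (Sigma t).
Proof.
elim: t => [//|t IH] /andP[_ ht].
case: t IH ht => [|t] IH ht; first by rewrite hS1; exact: good1.
have ht' : (1 <= t.+1 <= T)%N by rewrite ltnS in ht; rewrite ht.
rewrite Sig_step //.
have [_ gB _ _ _] := Rel_chain (enum (I t.+1)) (fun i => z t.+1 i) (IH (ltnW ht'))
  (fun i => p_ge0 (hne t.+1) (theta_hat t.+2) i).
exact: gB.
Qed.

Lemma Rel_Sig t0 t : (1 <= t0)%N -> (t0 <= t)%N -> (t <= T.+1)%N ->
  Rel (Sigma t0) (Sigma t).
Proof.
move=> h0; elim: t => [|t IH] h1 h2.
  by move: h0; rewrite leqn0 in h1; rewrite (eqP h1).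
case: (ltngtP t0 t.+1) h1 => // [lt _|e _]; last first.
  by rewrite -e; apply: Rel_refl; apply: good_Sig; rewrite h0 e h2.
have ht : (1 <= t <= T)%N by apply/andP; split; [exact: leq_trans h0 lt | by rewrite -ltnS].
apply: Rel_trans (IH lt (ltnW h2)) _.
rewrite Sig_step //.
apply: Rel_chain; last exact: (fun i => p_ge0 (hne t) (theta_hat t.+1) i).
by apply: good_Sig; case/andP: ht => -> /leqW.
Qed.

Lemma qf_lower t x : (1 <= t <= T.+1)%N -> lambda * dotv x x <= msqnorm (Sigma t) x.
Proof.
move=> /andP[h1 h2]; have [_ _ h _ _] := Rel_Sig (leqnn 1) h1 h2.
by rewrite -qf_scalar -hS1; apply: h.
Qed.

Lemma ellip t : (1 <= t <= T)%N ->
  Vt t <= 2 * (ln (\det (Sigma t.+1)) - ln (\det (Sigma t))).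
Proof.
move=> ht.
have ht' : (1 <= t <= T.+1)%N by case/andP: ht => -> /leqW.
have [sS pS dS] := good_Sig ht'.
have h := @ellip_chain R d S (enum (I t)) (q t) (fun i => z t i) (Sigma t) (Sigma t) 2
  (good_Sig ht') (fun i => p_ge0 (hne t) (theta_hat t.+1) i) sS pS (good_unit (good_Sig ht')) (ltr0Sn R 1).
rewrite -Sig_step // big_enum /= in h; apply: h => x.
rewrite hSrec // qf_addM.
have h1 := qf_hess_le (hne t) (hL t) (theta_hat t.+1) x.
have h2 := qf_lower x ht'.
have h3 : Lphi ^+ 2 * dotv x x <= lambda * dotv x x by apply: ler_wpM2r => //; exact: dotv_ge0.
have hH := le_trans h1 (le_trans h3 h2).
have -> : 2 * msqnorm (Sigma t) x = msqnorm (Sigma t) x + msqnorm (Sigma t) x by ring.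
exact: lerD (lexx _) hH.
Qed.

Lemma Vt_ge0 t : (1 <= t <= T)%N -> 0 <= Vt t.
Proof.
move=> ht; have ht' : (1 <= t <= T.+1)%N by case/andP: ht => -> /leqW.
apply: sumr_ge0 => i _; apply: mulr_ge0; first exact: p_ge0 (hne t) _ _.
exact: qf_inv_ge0 (good_Sig ht').
Qed.

Lemma trace_Sig t : (1 <= t <= T.+1)%N ->
  \tr (Sigma t) <= lambda * d%:R + (t.-1)%:R * Lphi ^+ 2.
Proof.
elim: t => [//|t IH] /andP[_ ht].
case: t IH ht => [|t] IH ht.
  by rewrite hS1 mxtrace_scalar /= mul0r addr0 mulr_natr.
have ht' : (1 <= t.+1 <= T)%N by rewrite ltnS in ht; rewrite ht.
rewrite hSrec // raddfD /=.
have h1 := IH (ltnW ht').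
have h2 := tr_hess_le (hne t.+1) (hL t.+1) (theta_hat t.+2).
apply: le_trans (lerD h1 h2) _.
rewrite /= -addrA lerD2l -[(t.+1)%:R]natr1 mulrDl mul1r.
exact: lexx.
Qed.

Lemma pd_Sig t : (1 <= t <= T.+1)%N -> pd (Sigma t).
Proof.
move=> ht x x0; apply: lt_le_trans (qf_lower x ht).
by apply: mulr_gt0 => //; apply: dotv_gt0.
Qed.

Lemma Umax_ge1 : (1 <= Umax Sr)%N.
Proof.
apply: leq_trans (leq_bigmax (s 0%N, a 0%N)).
case: (hA3 (s 0%N) (a 0%N)) => z zI _ /=.
by rewrite card_gt0; apply/set0Pn; exists z.
Qed.

Definition ell := ln (1 + T%:R * (Umax Sr)%:R * Lphi ^+ 2 / (lambda * d%:R)).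

Lemma sumV : \sum_(1 <= t < T.+1) Vt t <= 2 * (d%:R * ell).
Proof.
have dR : 0 < d%:R :> R by rewrite ltr0n.
have h1 : \sum_(1 <= t < T.+1) Vt t <=
    \sum_(1 <= t < T.+1) 2 * (ln (\det (Sigma t.+1)) - ln (\det (Sigma t))).
  by apply: ler_sum_nat => t ht; apply: ellip.
rewrite -mulr_sumr telescope_sumr // in h1.
apply: le_trans h1 _; apply: ler_wpM2l => //.
have hT1 : (1 <= T.+1 <= T.+1)%N by rewrite leqnn.
have [sT _ dT] := good_Sig hT1.
have hld := logdet_bound hd sT (pd_Sig hT1) dT (trace_Sig hT1).
rewrite /= in hld.
have e1 : ln (\det (Sigma 1%N)) = d%:R * ln lambda.
  by rewrite hS1 det_scalar lnXn // mulr_natl.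
rewrite e1; apply: (le_trans (lerB hld (lexx _))).
rewrite -mulrBr; apply: ler_wpM2l; first exact: ltW.
have hL0 : 0 <= Lphi ^+ 2 by apply: sqr_ge0.
have hx : 0 <= T%:R * Lphi ^+ 2 by apply: mulr_ge0.
have pos1 : 0 < (lambda * d%:R + T%:R * Lphi ^+ 2) / d%:R.
  by apply: divr_gt0 => //; rewrite -[0]addr0; apply: ltr_leD => //; apply: mulr_gt0.
rewrite -ln_div ?posrE //.
have -> : (lambda * d%:R + T%:R * Lphi ^+ 2) / d%:R / lambda =
          1 + T%:R * Lphi ^+ 2 / (lambda * d%:R).
  by field; rewrite !gt_eqF.
rewrite /ell ler_ln ?posrE; first last.
- apply: ltr_pwDl => //; apply: divr_ge0; first by apply: mulr_ge0 => //; apply: mulr_ge0.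
  by apply: mulr_ge0 => //; apply: ltW.
- by apply: ltr_pwDl => //; apply: divr_ge0 => //; apply: mulr_ge0 => //; apply: ltW.
rewrite lerD2l ler_pM2r ?invr_gt0 ?mulr_gt0 //.
apply: ler_wpM2r => //; rewrite ler_peMr ?ler0n //.
by rewrite ler1n Umax_ge1.
Qed.

Lemma Lth0 : 0 <= Ltheta.
Proof. exact: le_trans (sqrtr_ge0 _) hts. Qed.

Lemma ball t : (1 <= t <= T.+1)%N -> norm2 (theta_hat t) <= Ltheta.
Proof.
case: t => [//|t] /andP[_ ht]; case: t ht => [|t] ht.
  by rewrite hth1 /norm2 dotv0l sqrtr0; exact: Lth0.
have ht2 : (1 <= t.+1 <= T)%N by rewrite ltnS in ht; rewrite ht.
by case: (hOMD ht2).
Qed.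

Lemma omd_step t : (1 <= t <= T)%N ->
  nrm (Sigma t) (theta_hat t - theta_hat t.+1) <= 4 * eta * Lphi / Num.sqrt lambda.
Proof.
move=> ht; have ht' : (1 <= t <= T.+1)%N by case/andP: ht => -> /leqW.
have [_ hmin] := hOMD ht.
have h := hmin _ (ball ht').
rewrite /omd_obj subrr dotv0r /msqnorm mulmx0 dotv0r mulr0 addr0 in h.
set g := loss_grad Sr phi (s t) (a t) (s t.+1) (theta_hat t) in h.
set H := loss_hess Sr phi (s t) (a t) (theta_hat t) in h.
set Dl := theta_hat t.+1 - theta_hat t in h *.
rewrite -/(msqnorm _ Dl) qf_addM qf_scaleM in h.
set X := msqnorm (Sigma t) Dl in h.
have Y0 : 0 <= msqnorm H Dl by exact: psd_hess (hne t) _ Dl.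
have hg : `|dotv g Dl| <= 2 * Lphi * norm2 Dl.
  apply: le_trans (dot_le_norm2 g Dl) _; apply: ler_wpM2r; first exact: sqrtr_ge0.
  exact: (grad_norm (hne t) (hL t)).
have h' : dotv g Dl + (2 * eta)^-1 * (X + eta * msqnorm H Dl) <= 0 by [].
have hX := omd_arith heta h' hg.
have hX1 : X <= 4 * eta * Lphi * norm2 Dl.
  have -> : 4 * eta * Lphi * norm2 Dl = 2 * eta * (2 * Lphi * norm2 Dl) by ring.
  apply: le_trans hX; rewrite lerDl; apply: mulr_ge0 => //; exact: ltW.
have hX2 : lambda * norm2 Dl ^+ 2 <= X by rewrite -dotv_norm2; exact: qf_lower.
have e : nrm (Sigma t) (theta_hat t - theta_hat t.+1) = Num.sqrt X.
  by rewrite -opprB nrmN.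
rewrite e; apply: omd_final hlam _ (sqrtr_ge0 _) hX1 hX2.
apply: mulr_ge0; first by apply: mulr_ge0 => //; exact: ltW.
by apply: le_trans (sqrtr_ge0 _) (hphi (s 0%N) (a 0%N) (s 0%N)).
Qed.

Lemma tk_mono k l : (1 <= k)%N -> (k <= l)%N -> (l <= K.+1)%N -> (tk k <= tk l)%N.
Proof.
move=> k1; elim: l => [|l IH] hkl hl.
  by move: k1; rewrite leqn0 in hkl; rewrite (eqP hkl).
case: (ltngtP k l.+1) hkl => // [lt _|-> _]; last exact: leqnn.
apply: leq_trans (IH lt (ltnW hl)) _; apply: ltnW; apply: htkinc.
by rewrite (leq_trans k1 lt) -ltnS.
Qed.

Lemma ep_range k t : (1 <= k <= K)%N -> (tk k <= t < tk k.+1)%N ->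
  [/\ (1 <= tk k)%N, (1 <= t <= T)%N & (tk k <= T)%N].
Proof.
move=> /andP[k1 kK] /andP[h1 h2].
have t1 : (1 <= tk k)%N by rewrite -htk1; apply: tk_mono => //; exact: leqW.
have tT : (tk k.+1 <= T.+1)%N by rewrite -htkK; apply: tk_mono => //; exact: leqW.
have tT' : (t <= T)%N by rewrite -ltnS (leq_trans h2 tT).
split => //; first by rewrite (leq_trans t1 h1) tT'.
exact: leq_trans h1 tT'.
Qed.

Definition Dm := (Num.sqrt 2 + 1) * beta T + 4 * eta * Lphi / Num.sqrt lambda.
Definition Cc := 4 * Num.sqrt 2 * Dm / kappa.
Definition ft t := Num.sqrt 2 * Num.sqrt (Vt t) + Cc * Vt t.

Lemma mnormE (M : 'M[R]_d) x : mnorm M x = nrm M x.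
Proof. by []. Qed.

Lemma vec3 (u v w x : 'cV[R]_d) : u - x = (u - v) + ((v - w) + (w - x)).
Proof. by rewrite !addrA !subrK. Qed.

Lemma Dm_ge0 : 0 <= Dm.
Proof.
apply: addr_ge0; first by apply: mulr_ge0; [apply: addr_ge0 => //; exact: sqrtr_ge0 | exact: ltW].
apply: divr_ge0; last exact: sqrtr_ge0.
apply: mulr_ge0; first by apply: mulr_ge0 => //; exact: ltW.
by apply: le_trans (sqrtr_ge0 _) (hphi (s 0%N) (a 0%N) (s 0%N)).
Qed.

Lemma bonus_step k t : (1 <= k <= K)%N -> (tk k <= t < tk k.+1)%N ->
  bonus1 Sr phi (beta (tk k)) (Sigma (tk k)) (theta_hat (tk k)) (s t) (a t)
  <= beta T * ft t.
Proof.
move=> hkK hkt.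
have [t1 ht tkT] := ep_range hkK hkt.
have tkt : (tk k <= t)%N by case/andP: hkt.
have ht' : (1 <= t <= T.+1)%N by case/andP: ht => -> /leqW.
have htk : (1 <= tk k <= T)%N by rewrite t1 tkT.
have hT1 : (t <= T.+1)%N by case/andP: ht' => _ ->.
have [gK gT _ h4 h5] := Rel_Sig t1 tkt hT1.
have [sK pK dK] := gK; have [sT pT dT] := gT.
have ddet : \det (Sigma t) <= 2 * \det (Sigma (tk k)).
  case: (ltngtP (tk k) t) tkt => // [lt _|<- _].
    by apply: hdet => //; rewrite lt; case/andP: hkt.
  by rewrite ler_peMl ?ler1n // ltW.
have inv2 y : msqnorm (invmx (Sigma (tk k))) y <= 2 * msqnorm (invmx (Sigma t)) y.
  have q0 : 0 <= msqnorm (invmx (Sigma t)) y by exact: qf_inv_ge0.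
  rewrite -(ler_pM2r dK); apply: le_trans (h5 y) _.
  have -> : 2 * msqnorm (invmx (Sigma t)) y * \det (Sigma (tk k)) =
            2 * \det (Sigma (tk k)) * msqnorm (invmx (Sigma t)) y by ring.
  by apply: ler_wpM2r.
have fwd2 y : msqnorm (Sigma t) y <= 2 * msqnorm (Sigma (tk k)) y.
  have q0 : 0 <= msqnorm (Sigma (tk k)) y by exact: pK.
  rewrite -(ler_pM2r dK); apply: le_trans (h4 y) _.
  have -> : 2 * msqnorm (Sigma (tk k)) y * \det (Sigma (tk k)) =
            2 * \det (Sigma (tk k)) * msqnorm (Sigma (tk k)) y by ring.
  by apply: ler_wpM2r.
set th' := theta_hat (tk k); set th := theta_hat t.+1.
have hD : nrm (Sigma t) (th' - th) <= Dm.
  rewrite (vec3 th' theta_star (theta_hat t)).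
  apply: le_trans (nrm_triangle _ _ sT pT) _.
  apply: le_trans (lerD (lexx _) (nrm_triangle _ _ sT pT)) _.
  have a1 : nrm (Sigma t) (th' - theta_star) <= Num.sqrt 2 * beta T.
    apply: le_trans (sqrt_le2 (pK _) (fwd2 _)) _.
    apply: ler_wpM2l; first exact: sqrtr_ge0.
    apply: le_trans (hconf htk) _; exact: hbm.
  have a2 : nrm (Sigma t) (theta_star - theta_hat t) <= beta T.
    rewrite -opprB nrmN; apply: le_trans (hconf ht) _; apply: hbm.
    by case/andP: ht.
  have a3 := omd_step ht.
  rewrite /Dm mulrDl mul1r -addrA.
  exact: lerD a1 (lerD a2 a3).
have hk' : forall i j, i \in I t -> j \in I t ->
    kappa <= mnl_p Sr phi (s t) (a t) th i * mnl_p Sr phi (s t) (a t) th j.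
  move=> i j iI jI; apply: hA2 => //.
  by case: (hOMD ht).
have k0 : 0 < kappa by case/andP: hk.
have core := bonus_core (hne t) th' sT pT (good_unit gT) k0 hk'.
rewrite -/(Vt t) in core.
have V0 := Vt_ge0 ht.
set S1 := \sum_(i in I t) mnl_p Sr phi (s t) (a t) th' i *
            mnorm (invmx (Sigma (tk k))) (phi (s t) (a t) i - mnl_mean Sr phi (s t) (a t) th').
have hSa : S1 <= Num.sqrt 2 * \sum_(i in I t) mnl_p Sr phi (s t) (a t) th' i *
            nrm (invmx (Sigma t)) (phi (s t) (a t) i - mnl_mean Sr phi (s t) (a t) th').
  rewrite /S1 mulr_sumr; apply: ler_sum => i _.
  rewrite mnormE mulrCA; apply: ler_wpM2l; first exact: (p_ge0 (hne t)).
  apply: sqrt_le2; last exact: inv2.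
  exact: qf_inv_ge0.
have hS2 : S1 <= ft t.
  apply: le_trans hSa _; rewrite /ft /Cc.
  apply: le_trans (ler_wpM2l (sqrtr_ge0 _) core) _.
  rewrite mulrDr; apply: lerD => //.
  have -> : Num.sqrt 2 * (4 * nrm (Sigma t) (th' - th) * Vt t / kappa)
          = (4 * Num.sqrt 2 / kappa * Vt t) * nrm (Sigma t) (th' - th) by ring.
  have -> : 4 * Num.sqrt 2 * Dm / kappa * Vt t = (4 * Num.sqrt 2 / kappa * Vt t) * Dm by ring.
  apply: ler_wpM2l => //.
  apply: mulr_ge0 => //; apply: divr_ge0; last exact: ltW.
  by apply: mulr_ge0 => //; exact: sqrtr_ge0.
have S10 : 0 <= S1.
  apply: sumr_ge0 => i _; apply: mulr_ge0; first exact: (p_ge0 (hne t)).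
  exact: sqrtr_ge0.
rewrite /bonus1 -/S1.
apply: le_trans (ler_wpM2r S10 (hbm tkT)) _.
by apply: ler_wpM2l => //; exact: ltW.
Qed.

Lemma ep_sum (f : nat -> R) :
  \sum_(1 <= k < K.+1) \sum_(tk k <= t < tk k.+1) f t = \sum_(1 <= t < T.+1) f t.
Proof.
suff H : forall K', (K' <= K)%N -> \sum_(1 <= k < K'.+1) \sum_(tk k <= t < tk k.+1) f t
                                = \sum_(1 <= t < tk K'.+1) f t.
  by rewrite H // htkK.
elim=> [|K' IH] hK'; first by rewrite !big_geq // htk1.
rewrite big_nat_recr //= IH ?(ltnW hK') //.
rewrite -big_cat_nat //.
- by rewrite -htk1; apply: tk_mono => //; rewrite ltnS ltnW.
- by apply: ltnW; apply: htkinc; rewrite hK'.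
Qed.

Lemma main_bound :
  \sum_(1 <= k < K.+1) \sum_(tk k <= t < tk k.+1)
      bonus1 Sr phi (beta (tk k)) (Sigma (tk k)) (theta_hat (tk k)) (s t) (a t)
  <= beta T *
     ((32 * beta T / kappa
        + 128 * Num.sqrt 2 * Lphi * eta / (kappa * Num.sqrt lambda))
       * d%:R * ln (1 + T%:R * (Umax Sr)%:R * Lphi ^+ 2 / (lambda * d%:R))
      + 2 * Num.sqrt (d%:R * T%:R
              * ln (1 + T%:R * (Umax Sr)%:R * Lphi ^+ 2 / (lambda * d%:R)))).
Proof.
apply: (@le_trans _ _ (\sum_(1 <= k < K.+1) \sum_(tk k <= t < tk k.+1) beta T * ft t)).
  apply: ler_sum_nat => k hk1; apply: ler_sum_nat => t ht; apply: bonus_step => //.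
rewrite ep_sum -mulr_sumr /ft big_split /= -!mulr_sumr /Cc /Dm.
have L0 : 0 <= Lphi by apply: le_trans (sqrtr_ge0 _) (hphi (s 0%N) (a 0%N) (s 0%N)).
have k0 : 0 < kappa by case/andP: hk.
have ell0 : 0 <= ell.
  apply: ln_ge0; rewrite lerDl; apply: divr_ge0.
    by apply: mulr_ge0; [apply: mulr_ge0 | exact: sqr_ge0].
  by apply: mulr_ge0; [exact: ltW | exact: ler0n].
have SV0 : 0 <= \sum_(1 <= t < T.+1) Vt t.
  by rewrite big_nat_cond; apply: sumr_ge0 => t /andP[ht _]; apply: Vt_ge0.
have SSQ := @sqrt_sum_nat R 1 T.+1 Vt _ (fun t ht => Vt_ge0 ht) sumV.
rewrite subn1 /= in SSQ.
apply: (final_arith (bt := beta T) (e := eta) (L := Lphi) (k := kappa)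
          (sl := Num.sqrt lambda) (r2 := Num.sqrt 2)) => //.
all: try (by apply: ltW); try (by rewrite sqr_sqrtr ?ler0n); try (exact: sqrtr_ge0);
  try (by rewrite sqrtr_gt0); try (exact: ler0n); try (exact: sumV).
Qed.

End Main.

Unset Implicit Arguments.

Theorem lemma19 (R : realType) (S A : finType) (d : nat)
  (Sr : S -> A -> {set S}) (phi : S -> A -> S -> 'cV[R]_d)
  (theta_star : 'cV[R]_d) (Lphi Ltheta kappa lambda eta : R) (T : nat)
  (s : nat -> S) (a : nat -> A) (theta_hat : nat -> 'cV[R]_d)
  (Sigma : nat -> 'M[R]_d) (K : nat) (tk : nat -> nat) (beta : nat -> R) :
  (0 < d)%N -> (0 < T)%N ->
  (* (A1) *)
  (forall x y z, norm2 (phi x y z) <= Lphi) ->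
  norm2 theta_star <= Ltheta ->
  (* (A2) *)
  0 < kappa < 1 ->
  (forall t, (1 <= t <= T)%N -> forall th, norm2 th <= Ltheta ->
     forall s' s'', s' \in Sr (s t) (a t) -> s'' \in Sr (s t) (a t) ->
       kappa <= mnl_p Sr phi (s t) (a t) th s' * mnl_p Sr phi (s t) (a t) th s'') ->
  (* (A3) *)
  (forall x y, exists2 z, z \in Sr x y & phi x y z = 0) ->
  (* trajectory transitions stay in the reachable sets *)
  (forall t, (1 <= t <= T)%N -> s t.+1 \in Sr (s t) (a t)) ->
  (* online estimator *)
  0 < eta -> 0 < lambda ->
  theta_hat 1%N = 0 ->
  Sigma 1%N = lambda%:M ->
  (forall t, (1 <= t <= T)%N ->
     Sigma t.+1 = Sigma t + loss_hess Sr phi (s t) (a t) (theta_hat t.+1)) ->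
  (forall t, (1 <= t <= T)%N ->
     norm2 (theta_hat t.+1) <= Ltheta /\
     forall th, norm2 th <= Ltheta ->
       omd_obj eta (loss_grad Sr phi (s t) (a t) (s t.+1) (theta_hat t))
               (Sigma t + eta *: loss_hess Sr phi (s t) (a t) (theta_hat t))
               (theta_hat t) (theta_hat t.+1)
       <= omd_obj eta (loss_grad Sr phi (s t) (a t) (s t.+1) (theta_hat t))
               (Sigma t + eta *: loss_hess Sr phi (s t) (a t) (theta_hat t))
               (theta_hat t) th) ->
  (* episodes k = 1..K starting at tk k, with tk 1 = 1, tk (K+1) = T+1 *)
  (1 <= K)%N -> tk 1%N = 1%N -> tk K.+1 = T.+1 ->
  (forall k, (1 <= k <= K)%N -> (tk k < tk k.+1)%N) ->
  (forall k t, (1 <= k <= K)%N -> (tk k < t < tk k.+1)%N ->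
     \det (Sigma t) <= 2 * \det (Sigma (tk k))) ->
  (forall k, (1 <= k < K)%N ->
     2 * \det (Sigma (tk k)) < \det (Sigma (tk k.+1))) ->
  (* confidence radii *)
  (forall t, 0 < beta t) ->
  (forall t t', (t <= t')%N -> beta t <= beta t') ->
  (forall t, (1 <= t <= T)%N ->
     mnorm (Sigma t) (theta_hat t - theta_star) <= beta t) ->
  Lphi ^+ 2 <= lambda ->
  \sum_(1 <= k < K.+1) \sum_(tk k <= t < tk k.+1)
      bonus1 Sr phi (beta (tk k)) (Sigma (tk k)) (theta_hat (tk k)) (s t) (a t)
  <= beta T *
     ((32 * beta T / kappa
        + 128 * Num.sqrt 2 * Lphi * eta / (kappa * Num.sqrt lambda))
       * d%:R * ln (1 + T%:R * (Umax Sr)%:R * Lphi ^+ 2 / (lambda * d%:R))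
      + 2 * Num.sqrt (d%:R * T%:R
              * ln (1 + T%:R * (Umax Sr)%:R * Lphi ^+ 2 / (lambda * d%:R)))).
Proof.
move=> hd hT hphi hts hk hA2 hA3 htr heta hlam hth1 hS1 hSrec hOMD hK1 htk1 htkK htkinc hdet hdet2 hb0 hbm hconf hlL.
apply: main_bound; eassumption.
Qed.
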